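(* Let $T$ be a complete classical theory in a countable language, no model of which is a singleton, and let $\Phi$ be a rich sequence. Then $\mathbf{G}_\Phi(T)$ is a Polish open topological groupoid, and its base $\mathbf{B}_\Phi(T)$ is homeomorphic to the Cantor set.
   Context: (Single-sorted for simplicity.) $\Phi=(\varphi_n(x_{<n},y))_n$, $y$ a single variable, is rich if every formula $\varphi(x_{<k},y)$ appears (with dummy variables) as $\varphi_n$ for some $n\ge k$. $D_{\Phi,n}(x_{<n})=\bigwedge_{k<n}\forall y[\varphi_k(x_{<k},y)\to\varphi_k(x_{\le k})]$, $D_\Phi=\bigwedge_nD_{\Phi,n}$. $\mathbf{G}_\Phi(T)$ is the set of types $\mathrm{tp}(a,b)$, in the space of types of pairs of $\mathbb{N}$-indexed sequences (logic topology; subspace topology), with $a,b$ realising $D_\Phi$ and having the same set of entries; composition $\mathrm{tp}(a,b)\mathrm{tp}(b,c)=\mathrm{tp}(a,c)$, inverse $\mathrm{tp}(b,a)$. Base $\mathbf{B}_\Phi(T)=\{\mathrm{tp}(a,a)\}$, identified with the space of types of realisations of $D_\Phi$; $s_{\mathrm{tp}(a,b)}=\mathrm{tp}(b)$, $t_{\mathrm{tp}(a,b)}=\mathrm{tp}(a)$. A topological groupoid is open if its source map is open; Polish means separable completely metrisable. *)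

(* Defs.v *)
From Stdlib Require Import Reals Classical FunctionalExtensionality PropExtensionality.
From Stdlib Require Fin.
Set Implicit Arguments.
Open Scope R_scope.

Record Language := {
  Fsym : Type;
  Rsym : Type;
  farity : Fsym -> nat;
  rarity : Rsym -> nat
}.

Definition countable_language (L : Language) : Prop :=
  (exists e : Fsym L -> nat, forall f g, e f = e g -> f = g) /\
  (exists e : Rsym L -> nat, forall r s, e r = e s -> r = s).

Section Syntax.
Variable L : Language.

Inductive term : Type :=
| tvar : nat -> term
| tapp : forall f : Fsym L, (Fin.t (farity L f) -> term) -> term.

Inductive formula : Type :=
| fFalse : formula
| fEq : term -> term -> formula
| fRel : forall r : Rsym L, (Fin.t (rarity L r) -> term) -> formula
| fNot : formula -> formula
| fAnd : formula -> formula -> formula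
| fOr : formula -> formula -> formula
| fImp : formula -> formula -> formula
| fEx : nat -> formula -> formula
| fAll : nat -> formula -> formula.

Fixpoint occurs_term (n : nat) (t : term) : Prop :=
  match t with
  | tvar m => m = n
  | tapp f args => exists i, occurs_term n (args i)
  end.

Fixpoint occurs_free (n : nat) (phi : formula) : Prop :=
  match phi with
  | fFalse => False
  | fEq t u => occurs_term n t \/ occurs_term n u
  | fRel r args => exists i, occurs_term n (args i)
  | fNot p => occurs_free n p
  | fAnd p q | fOr p q | fImp p q => occurs_free n p \/ occurs_free n q
  | fEx m p | fAll m p => m <> n /\ occurs_free n p
  end.

Definition sentence (phi : formula) : Prop := forall n, ~ occurs_free n phi.

Record Structure := {
  dom : Type;
  dom_inhabited : inhabited dom;
  fint : forall f : Fsym L, (Fin.t (farity L f) -> dom) -> dom;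
  rint : forall r : Rsym L, (Fin.t (rarity L r) -> dom) -> Prop
}.

Fixpoint eval (M : Structure) (env : nat -> dom M) (t : term) : dom M :=
  match t with
  | tvar n => env n
  | tapp f args => fint M f (fun i => eval M env (args i))
  end.

Definition upd (M : Structure) (env : nat -> dom M) (n : nat) (c : dom M)
  : nat -> dom M := fun m => if Nat.eqb m n then c else env m.

Fixpoint sat (M : Structure) (env : nat -> dom M) (phi : formula) : Prop :=
  match phi with
  | fFalse => False
  | fEq t u => eval M env t = eval M env u
  | fRel r args => rint M r (fun i => eval M env (args i))
  | fNot p => ~ sat M env p
  | fAnd p q => sat M env p /\ sat M env q
  | fOr p q => sat M env p \/ sat M env q
  | fImp p q => sat M env p -> sat M env q
  | fEx n p => exists c, sat M (upd M env n c) p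
  | fAll n p => forall c, sat M (upd M env n c) p
  end.

Definition theory := formula -> Prop.

Definition is_model (T : theory) (M : Structure) : Prop :=
  forall phi, T phi -> forall env, sat M env phi.

Definition complete_theory (T : theory) : Prop :=
  (exists M, is_model T M) /\
  forall phi, sentence phi ->
    (forall M, is_model T M -> forall env, sat M env phi) \/
    (forall M, is_model T M -> forall env, sat M env (fNot phi)).

Definition no_singleton_model (T : theory) : Prop :=
  forall M, is_model T M -> exists a b : dom M, a <> b.

(* Variable convention for phi_n(x_{<n}, y):  y is variable 0,  x_i is
   variable i+1.  So phi_n has free variables among 0, 1, ..., n. *)

Definition seq_formulas := nat -> formula.

Definition fv_below (k : nat) (phi : formula) : Prop :=
  forall m, occurs_free m phi -> (m <= k)%nat.

Definition is_Phi (Phi : seq_formulas) : Prop :=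
  forall n, fv_below n (Phi n).

Definition rich (Phi : seq_formulas) : Prop :=
  is_Phi Phi /\
  forall k phi, fv_below k phi -> exists n, (k <= n)%nat /\ Phi n = phi.

Definition env_xy (M : Structure) (a : nat -> dom M) (c : dom M) : nat -> dom M :=
  fun m => match m with O => c | S i => a i end.

(* a realises D_Phi = /\_n D_{Phi,n}, i.e. for every k,
   a |= forall y [phi_k(x_{<k}, y) -> phi_k(x_{<=k})]  *)
Definition realises_D (Phi : seq_formulas) (M : Structure) (a : nat -> dom M) : Prop :=
  forall k, forall c : dom M,
    sat M (env_xy M a c) (Phi k) -> sat M (env_xy M a (a k)) (Phi k).

(* Pair convention: x_i is variable 2i, y_i is variable 2i+1.         *)

Definition pair_env (M : Structure) (a b : nat -> dom M) : nat -> dom M :=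
  fun m => if Nat.even m then a (Nat.div2 m) else b (Nat.div2 m).

Definition ptype := formula -> Prop.

Definition tp2 (M : Structure) (a b : nat -> dom M) : ptype :=
  fun phi => sat M (pair_env M a b) phi.

Definition same_entries (M : Structure) (a b : nat -> dom M) : Prop :=
  (forall i, exists j, a i = b j) /\ (forall j, exists i, b j = a i).

Definition Gset (T : theory) (Phi : seq_formulas) : ptype -> Prop :=
  fun p => exists M, is_model T M /\ exists a b : nat -> dom M,
    realises_D Phi M a /\ realises_D Phi M b /\ same_entries M a b /\
    p = tp2 M a b.

Definition Bset (T : theory) (Phi : seq_formulas) : ptype -> Prop :=
  fun p => exists M, is_model T M /\ exists a : nat -> dom M,
    realises_D Phi M a /\ p = tp2 M a a.

End Syntax.

(* A space is a set [pts] of points of a carrier type together with a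
   family [opn] of "open" subsets of the carrier; only the trace V /\ pts
   of an open set V is meaningful (relative openness). *)
Record space := {
  carrier : Type;
  pts : carrier -> Prop;
  opn : (carrier -> Prop) -> Prop
}.

Definition logic_space (L : Language) (S : ptype L -> Prop) : space :=
  {| carrier := ptype L; pts := S;
     opn := fun V => forall p, S p -> V p ->
              exists phi, p phi /\ forall q, S q -> q phi -> V q |}.

Definition subspace (X : space) (A : carrier X -> Prop) : space :=
  {| carrier := carrier X; pts := fun x => pts X x /\ A x; opn := opn X |}.

Definition prod_space (X Y : space) : space :=
  {| carrier := (carrier X * carrier Y)%type;
     pts := fun z => pts X (fst z) /\ pts Y (snd z);
     opn := fun W => forall x y, pts X x -> pts Y y -> W (x, y) ->
              exists U V, opn X U /\ opn Y V /\ U x /\ V y /\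
                forall x' y', pts X x' -> pts Y y' -> U x' -> V y' -> W (x', y') |}.

Definition maps_into (X Y : space) (f : carrier X -> carrier Y) : Prop :=
  forall x, pts X x -> pts Y (f x).

Definition continuous_sp (X Y : space) (f : carrier X -> carrier Y) : Prop :=
  maps_into X Y f /\ forall V, opn Y V -> opn X (fun x => V (f x)).

Definition open_map (X Y : space) (f : carrier X -> carrier Y) : Prop :=
  forall U, opn X U -> opn Y (fun y => exists x, pts X x /\ U x /\ f x = y).

Definition homeomorphic (X Y : space) : Prop :=
  exists (f : carrier X -> carrier Y) (g : carrier Y -> carrier X),
    continuous_sp X Y f /\ continuous_sp Y X g /\
    (forall x, pts X x -> g (f x) = x) /\ (forall y, pts Y y -> f (g y) = y).

Definition polish (X : space) : Prop :=
  exists d : carrier X -> carrier X -> R,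
    (forall x y, pts X x -> pts X y -> 0 <= d x y) /\
    (forall x y, pts X x -> pts X y -> (d x y = 0 <-> x = y)) /\
    (forall x y, pts X x -> pts X y -> d x y = d y x) /\
    (forall x y z, pts X x -> pts X y -> pts X z -> d x z <= d x y + d y z) /\
    (forall V, opn X V <->
       forall x, pts X x -> V x ->
         exists eps, 0 < eps /\ forall y, pts X y -> d x y < eps -> V y) /\
    (forall u : nat -> carrier X, (forall n, pts X (u n)) ->
       (forall eps, 0 < eps -> exists N, forall m n, (N <= m)%nat -> (N <= n)%nat ->
          d (u m) (u n) < eps) ->
       exists l, pts X l /\ forall eps, 0 < eps -> exists N, forall n, (N <= n)%nat ->
          d (u n) l < eps) /\
    (exists u : nat -> carrier X, forall x, pts X x -> forall eps, 0 < eps ->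
       exists n, pts X (u n) /\ d x (u n) < eps).

Definition cantor : space :=
  {| carrier := nat -> bool; pts := fun _ => True;
     opn := fun V => forall x, V x -> exists n, forall y,
              (forall i, (i < n)%nat -> y i = x i) -> V y |}.

Definition Gspace L (T : theory L) (Phi : seq_formulas L) : space :=
  logic_space (Gset T Phi).

Definition Bspace L (T : theory L) (Phi : seq_formulas L) : space :=
  logic_space (Bset T Phi).

Definition composable L (T : theory L) (Phi : seq_formulas L)
  (s t : ptype L -> ptype L) : space :=
  subspace (prod_space (Gspace T Phi) (Gspace T Phi))
           (fun z => s (fst z) = t (snd z)).

Definition groupoid_maps_spec L (T : theory L) (Phi : seq_formulas L)
  (s t inv : ptype L -> ptype L) (mul : ptype L -> ptype L -> ptype L) : Prop :=
  (forall M, is_model T M -> forall a b c : nat -> dom M,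
     realises_D Phi M a -> realises_D Phi M b -> realises_D Phi M c ->
     same_entries M a b -> same_entries M b c ->
     s (tp2 M a b) = tp2 M b b /\ t (tp2 M a b) = tp2 M a a /\
     inv (tp2 M a b) = tp2 M b a /\
     mul (tp2 M a b) (tp2 M b c) = tp2 M a c) /\
  (forall p q, Gset T Phi p -> Gset T Phi q -> s p = t q ->
     exists M, is_model T M /\ exists a b c : nat -> dom M,
       realises_D Phi M a /\ realises_D Phi M b /\ realises_D Phi M c /\
       same_entries M a b /\ same_entries M b c /\
       p = tp2 M a b /\ q = tp2 M b c).

Definition groupoid_axioms L (Gs Bs : ptype L -> Prop)
  (s t inv : ptype L -> ptype L) (mul : ptype L -> ptype L -> ptype L) : Prop :=
  (forall e, Bs e -> Gs e) /\
  (forall e, Bs e -> s e = e /\ t e = e) /\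
  (forall g, Gs g -> Bs (s g) /\ Bs (t g) /\ Gs (inv g)) /\
  (forall g h, Gs g -> Gs h -> s g = t h ->
     Gs (mul g h) /\ s (mul g h) = s h /\ t (mul g h) = t g) /\
  (forall f g h, Gs f -> Gs g -> Gs h -> s f = t g -> s g = t h ->
     mul (mul f g) h = mul f (mul g h)) /\
  (forall g, Gs g -> mul (t g) g = g /\ mul g (s g) = g) /\
  (forall g, Gs g -> s (inv g) = t g /\ t (inv g) = s g /\
     mul g (inv g) = t g /\ mul (inv g) g = s g).

Definition polish_open_topological_groupoid L (T : theory L) (Phi : seq_formulas L) : Prop :=
  exists (s t inv : ptype L -> ptype L) (mul : ptype L -> ptype L -> ptype L),
    groupoid_maps_spec T Phi s t inv mul /\
    groupoid_axioms (Gset T Phi) (Bset T Phi) s t inv mul /\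
    continuous_sp (composable T Phi s t) (Gspace T Phi) (fun z => mul (fst z) (snd z)) /\
    continuous_sp (Gspace T Phi) (Gspace T Phi) inv /\
    continuous_sp (Gspace T Phi) (Bspace T Phi) s /\
    continuous_sp (Gspace T Phi) (Bspace T Phi) t /\
    (* open: the source map is open *)
    open_map (Gspace T Phi) (Bspace T Phi) s /\
    polish (Gspace T Phi).

(* Main.v *)
Require Import Defs.
From Stdlib Require Import Reals Classical ClassicalEpsilon FunctionalExtensionality PropExtensionality ProofIrrelevance Arith Lia Lra List.
From Stdlib Require Fin.


Set Implicit Arguments.

Definition ev (P : nat -> Prop) : Prop := exists K, forall k, (K <= k)%nat -> P k.

Lemma ev_mono (P Q : nat -> Prop) : (forall k, P k -> Q k) -> ev P -> ev Q.
Proof. intros H [K HK]; exists K; auto. Qed.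

Lemma ev_and (P Q : nat -> Prop) : ev P -> ev Q -> ev (fun k => P k /\ Q k).
Proof. intros [K1 H1] [K2 H2]; exists (K1 + K2)%nat; intros k Hk; split; [apply H1|apply H2]; lia. Qed.

Lemma ev_true (P : nat -> Prop) : (forall k, P k) -> ev P.
Proof. intros H; exists 0%nat; auto. Qed.

Lemma ev_not (P : nat -> Prop) : ev (fun k => ~ P k) -> ~ ev P.
Proof. intros [K1 H1] [K2 H2]. apply (H1 (K1+K2)%nat); [lia|]. apply H2; lia. Qed.

Lemma ev_lt (N : nat) (P : nat -> nat -> Prop) :
  (forall m, (m < N)%nat -> ev (P m)) -> ev (fun k => forall m, (m < N)%nat -> P m k).
Proof.
  induction N; intros H.
  - apply ev_true; intros; lia.
  - destruct (IHN (fun m Hm => H m ltac:(lia))) as [K1 H1].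
    destruct (H N ltac:(lia)) as [K2 H2].
    exists (K1 + K2)%nat; intros k Hk m Hm.
    destruct (Nat.eq_dec m N); [subst; apply H2; lia| apply H1; lia].
Qed.

Lemma ev_fin (r : nat) (P : Fin.t r -> nat -> Prop) :
  (forall x, ev (P x)) -> ev (fun k => forall x, P x k).
Proof.
  induction r; intros H.
  - apply ev_true; intros k x; apply (Fin.case0 (fun x => P x k) x).
  - destruct (IHr (fun x => P (Fin.FS x)) (fun x => H (Fin.FS x))) as [K1 H1].
    destruct (H Fin.F1) as [K2 H2].
    exists (K1 + K2)%nat; intros k Hk x.
    apply (Fin.caseS' x (fun x => P x k)); [apply H2; lia| intros; apply H1; lia].
Qed.

Lemma fin_bound (r : nat) (P : Fin.t r -> nat -> Prop) :
  (forall x, exists K, forall k, (K <= k)%nat -> P x k) -> exists K, forall x k, (K <= k)%nat -> P x k.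
Proof.
  intros H. destruct (ev_fin (fun x k => forall k', (k <= k')%nat -> P x k')) as [K HK].
  - intros x; destruct (H x) as [K HK]; exists K; intros k Hk k' Hk'; apply HK; lia.
  - exists K; intros x k Hk; apply (HK K (le_n _) x k Hk).
Qed.

Lemma least_exists (P : nat -> Prop) : (exists j, P j) -> exists j, P j /\ forall j', (j' < j)%nat -> ~ P j'.
Proof.
  intros [j Hj]. apply NNPP; intros Hn.
  assert (forall n, forall m, (m <= n)%nat -> ~ P m).
  { induction n; intros m Hm Pm.
    - apply Hn; exists m; split; auto; intros; lia.
    - destruct (Nat.eq_dec m (S n)); [|apply (IHn m); auto; lia].
      subst; apply Hn; exists (S n); split; auto; intros j' Hj'; apply IHn; lia. }
  apply (H j j); auto.
Qed.

Definition least (P : nat -> Prop) : nat :=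
  epsilon (inhabits 0%nat) (fun j => P j /\ forall j', (j' < j)%nat -> ~ P j').

Lemma least_spec (P : nat -> Prop) : (exists j, P j) -> P (least P) /\ forall j', (j' < least P)%nat -> ~ P j'.
Proof. intros H; unfold least; apply epsilon_spec; apply least_exists; auto. Qed.

Lemma least_unique (P : nat -> Prop) j : P j -> (forall j', (j' < j)%nat -> ~ P j') -> least P = j.
Proof.
  intros Hj Hm. destruct (least_spec P (ex_intro _ j Hj)) as [H1 H2].
  destruct (lt_eq_lt_dec (least P) j) as [[Hl|Hl]|Hl]; auto.
  - exfalso; apply (Hm _ Hl H1).
  - exfalso; apply (H2 _ Hl Hj).
Qed.

Lemma least_le (P : nat -> Prop) j : P j -> (least P <= j)%nat.
Proof.
  intros Hj; destruct (least_spec P (ex_intro _ j Hj)) as [_ H2].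
  destruct (le_lt_dec (least P) j); auto. exfalso; apply (H2 j); auto.
Qed.

Section Syn.
Variable L : Language.

Fixpoint finmax (r : nat) : (Fin.t r -> nat) -> nat :=
  match r with
  | O => fun _ => O
  | S r' => fun g => Nat.max (g Fin.F1) (@finmax r' (fun x => g (Fin.FS x)))
  end.
Arguments finmax : clear implicits.

Lemma finmax_ge r (g : Fin.t r -> nat) x : (g x <= finmax r g)%nat.
Proof.
  induction r; [apply (Fin.case0 (fun x => (g x <= _)%nat) x)|].
  apply (Fin.caseS' x (fun x => (g x <= finmax (S r) g)%nat)); simpl; [lia|].
  intros p; specialize (IHr (fun x => g (Fin.FS x)) p); simpl in IHr; lia.
Qed.

Fixpoint tb (t : term L) : nat :=
  match t with
  | tvar _ n => S n
  | tapp f args => finmax _ (fun x => tb (args x))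
  end.

Fixpoint fb (p : formula L) : nat :=
  match p with
  | fFalse _ => O
  | fEq t u => Nat.max (tb t) (tb u)
  | fRel r args => finmax _ (fun x => tb (args x))
  | fNot p => fb p
  | fAnd p q | fOr p q | fImp p q => Nat.max (fb p) (fb q)
  | fEx n p | fAll n p => Nat.max (S n) (fb p)
  end.

Lemma occurs_term_lt n t : occurs_term n t -> (n < tb t)%nat.
Proof.
  induction t as [m|f args IH]; simpl; [lia|].
  intros [i Hi]. specialize (IH i Hi). pose proof (finmax_ge (fun x => tb (args x)) i). simpl in *; lia.
Qed.

Lemma occurs_free_lt n p : occurs_free n p -> (n < fb p)%nat.
Proof.
  induction p; cbn [occurs_free fb]; try tauto.
  - intros [H|H]; apply occurs_term_lt in H; lia.
  - intros [i Hi]. apply occurs_term_lt in Hi. pose proof (finmax_ge (fun x => tb (t x)) i). simpl in *; lia.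
  - intros [H|H]; [apply IHp1 in H|apply IHp2 in H]; lia.
  - intros [H|H]; [apply IHp1 in H|apply IHp2 in H]; lia.
  - intros [H|H]; [apply IHp1 in H|apply IHp2 in H]; lia.
  - intros [_ H]; apply IHp in H; lia.
  - intros [_ H]; apply IHp in H; lia.
Qed.

Lemma eval_coinc (M : Structure L) (e e' : nat -> dom M) t :
  (forall n, occurs_term n t -> e n = e' n) -> eval M e t = eval M e' t.
Proof.
  induction t as [m|f args IH]; simpl; intros H; [apply H; auto|].
  f_equal; apply functional_extensionality; intros x; apply IH; intros n Hn; apply H; exists x; auto.
Qed.

Lemma sat_coinc (M : Structure L) p : forall (e e' : nat -> dom M),
  (forall n, occurs_free n p -> e n = e' n) -> (sat M e p <-> sat M e' p).
Proof.
  induction p; simpl; intros e e' H.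
  - tauto.
  - rewrite (@eval_coinc M e e' t), (@eval_coinc M e e' t0); [tauto| |]; intros; apply H; auto.
  - replace (fun i => eval M e (t i)) with (fun i => eval M e' (t i)); [tauto|].
    apply functional_extensionality; intros i; symmetry; apply eval_coinc; intros; apply H; exists i; auto.
  - rewrite (IHp e e' H); tauto.
  - rewrite (IHp1 e e'), (IHp2 e e'); [tauto| |]; intros; apply H; auto.
  - rewrite (IHp1 e e'), (IHp2 e e'); [tauto| |]; intros; apply H; auto.
  - rewrite (IHp1 e e'), (IHp2 e e'); [tauto| |]; intros; apply H; auto.
  - split; intros [c Hc]; exists c; revert Hc; apply IHp; intros m Hm; unfold upd;
      destruct (Nat.eqb m n) eqn:E; auto; apply Nat.eqb_neq in E;
      first [apply H; split; auto | symmetry; apply H; split; auto].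
  - split; intros Hc c; specialize (Hc c); revert Hc; apply IHp; intros m Hm; unfold upd;
      destruct (Nat.eqb m n) eqn:E; auto; apply Nat.eqb_neq in E;
      first [apply H; split; auto | symmetry; apply H; split; auto].
Qed.

Lemma sat_ext (M : Structure L) p (e e' : nat -> dom M) :
  (forall n, e n = e' n) -> (sat M e p <-> sat M e' p).
Proof. intros H; apply sat_coinc; auto. Qed.

Fixpoint trn (rho : nat -> nat) (t : term L) : term L :=
  match t with
  | tvar _ n => tvar L (rho n)
  | tapp f args => tapp f (fun x => trn rho (args x))
  end.

Fixpoint mx (rho : nat -> nat) (N : nat) : nat :=
  match N with O => O | S N' => Nat.max (rho N') (mx rho N') end.

Lemma mx_ge rho N m : (m < N)%nat -> (rho m <= mx rho N)%nat.
Proof. induction N; simpl; intros; [lia|]. destruct (Nat.eq_dec m N); [subst; lia|]. specialize (IHN ltac:(lia)); lia. Qed.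

Definition updn (rho : nat -> nat) (n v : nat) : nat -> nat :=
  fun m => if Nat.eqb m n then v else rho m.

Fixpoint rn (rho : nat -> nat) (p : formula L) : formula L :=
  match p with
  | fFalse _ => fFalse L
  | fEq t u => fEq (trn rho t) (trn rho u)
  | fRel r args => fRel r (fun x => trn rho (args x))
  | fNot p => fNot (rn rho p)
  | fAnd p q => fAnd (rn rho p) (rn rho q)
  | fOr p q => fOr (rn rho p) (rn rho q)
  | fImp p q => fImp (rn rho p) (rn rho q)
  | fEx n p => fEx (S (mx rho (fb p))) (rn (updn rho n (S (mx rho (fb p)))) p)
  | fAll n p => fAll (S (mx rho (fb p))) (rn (updn rho n (S (mx rho (fb p)))) p)
  end.

Lemma eval_trn (M : Structure L) (e : nat -> dom M) rho t :
  eval M e (trn rho t) = eval M (fun m => e (rho m)) t.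
Proof.
  induction t as [m|f args IH]; simpl; auto.
  f_equal; apply functional_extensionality; intros x; apply IH.
Qed.

Lemma rn_quant_env (M : Structure L) (e : nat -> dom M) rho n p c :
  forall m, occurs_free m p ->
   upd M e (S (mx rho (fb p))) c (updn rho n (S (mx rho (fb p))) m) = upd M (fun m => e (rho m)) n c m.
Proof.
  intros m Hm. unfold upd, updn. destruct (Nat.eqb m n) eqn:E.
  - rewrite Nat.eqb_refl; auto.
  - apply occurs_free_lt in Hm. pose proof (mx_ge rho Hm).
    destruct (Nat.eqb (rho m) (S (mx rho (fb p)))) eqn:E2; auto.
    apply Nat.eqb_eq in E2; lia.
Qed.

Lemma sat_rn (M : Structure L) p : forall rho (e : nat -> dom M),
  sat M e (rn rho p) <-> sat M (fun m => e (rho m)) p.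
Proof.
  induction p; simpl; intros rho e.
  - tauto.
  - rewrite !eval_trn; tauto.
  - replace (fun i => eval M e (trn rho (t i))) with (fun i => eval M (fun m => e (rho m)) (t i)); [tauto|].
    apply functional_extensionality; intros; rewrite eval_trn; auto.
  - rewrite IHp; tauto.
  - rewrite IHp1, IHp2; tauto.
  - rewrite IHp1, IHp2; tauto.
  - rewrite IHp1, IHp2; tauto.
  - split; intros [c Hc]; exists c.
    + rewrite IHp in Hc; revert Hc; apply sat_coinc; intros m0 Hm0; first [apply rn_quant_env; auto | symmetry; apply rn_quant_env; auto].
    + rewrite IHp; revert Hc; apply sat_coinc; intros m0 Hm0; first [apply rn_quant_env; auto | symmetry; apply rn_quant_env; auto].
  - split; intros Hc c; specialize (Hc c).
    + rewrite IHp in Hc; revert Hc; apply sat_coinc; intros m0 Hm0; first [apply rn_quant_env; auto | symmetry; apply rn_quant_env; auto].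
    + rewrite IHp; revert Hc; apply sat_coinc; intros m0 Hm0; first [apply rn_quant_env; auto | symmetry; apply rn_quant_env; auto].
Qed.

Lemma occurs_trn m rho t : occurs_term m (trn rho t) -> exists m', occurs_term m' t /\ rho m' = m.
Proof.
  induction t as [k|f args IH]; simpl.
  - intros H; exists k; auto.
  - intros [i Hi]. destruct (IH i Hi) as [m' [H1 H2]]. exists m'; split; auto; exists i; auto.
Qed.

Lemma occurs_rn p : forall m rho, occurs_free m (rn rho p) -> exists m', occurs_free m' p /\ rho m' = m.
Proof.
  induction p; simpl; intros m rho H.
  - tauto.
  - destruct H as [H|H]; apply occurs_trn in H; destruct H as [m' [H1 H2]]; exists m'; auto.
  - destruct H as [i H]; apply occurs_trn in H; destruct H as [m' [H1 H2]]; exists m'; split; auto; exists i; auto.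
  - apply IHp; auto.
  - destruct H as [H|H]; [apply IHp1 in H|apply IHp2 in H]; destruct H as [m' [H1 H2]]; exists m'; auto.
  - destruct H as [H|H]; [apply IHp1 in H|apply IHp2 in H]; destruct H as [m' [H1 H2]]; exists m'; auto.
  - destruct H as [H|H]; [apply IHp1 in H|apply IHp2 in H]; destruct H as [m' [H1 H2]]; exists m'; auto.
  - destruct H as [Hne H]. apply IHp in H. destruct H as [m' [H1 H2]].
    unfold updn in H2. destruct (Nat.eqb m' n) eqn:E; [congruence|].
    apply Nat.eqb_neq in E. exists m'; split; auto.
  - destruct H as [Hne H]. apply IHp in H. destruct H as [m' [H1 H2]].
    unfold updn in H2. destruct (Nat.eqb m' n) eqn:E; [congruence|].
    apply Nat.eqb_neq in E. exists m'; split; auto.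
Qed.

Fixpoint bigand (n : nat) (f : nat -> formula L) : formula L :=
  match n with O => fNot (fFalse L) | S n' => fAnd (bigand n' f) (f n') end.

Lemma sat_bigand (M : Structure L) e n f : sat M e (bigand n f) <-> forall i, (i < n)%nat -> sat M e (f i).
Proof.
  induction n; simpl.
  - split; auto; intros; lia.
  - rewrite IHn; split.
    + intros [H1 H2] i Hi. destruct (Nat.eq_dec i n); [subst; auto| apply H1; lia].
    + intros H; split; auto.
Qed.

End Syn.


Unset Implicit Arguments.
Open Scope nat_scope.

Fixpoint unpair (n : nat) : nat * nat :=
  match n with
  | O => (O, O)
  | S n' => let (x, y) := unpair n' in
            match x with O => (S y, O) | S x' => (x', S y) end
  end.

Lemma unpair_diag s : forall k, (k <= s)%nat -> exists n, unpair n = (s - k, k)%nat.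
Proof.
  induction s.
  - intros k Hk; exists O; simpl; f_equal; lia.
  - assert (H0 : exists n, unpair n = (S s, O)).
    { destruct (IHs s (le_n _)) as [n Hn]. exists (S n); simpl; rewrite Hn.
      replace (s - s)%nat with O by lia; auto. }
    intros k; induction k; intros Hk.
    + destruct H0 as [n Hn]; exists n; rewrite Hn; f_equal.
    + destruct (IHk ltac:(lia)) as [n Hn]. exists (S n); simpl; rewrite Hn.
      destruct (S s - k)%nat eqn:E; [lia|]. f_equal; lia.
Qed.

Lemma unpair_surj x y : exists n, unpair n = (x, y).
Proof.
  destruct (unpair_diag (x + y) y ltac:(lia)) as [n Hn]. exists n; rewrite Hn; f_equal; lia.
Qed.

Section Enum.
Variable X : Type.

Fixpoint vdec (r : nat) (g : nat -> X) (c : nat) : Fin.t r -> X :=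
  match r with
  | O => fun x => Fin.case0 (fun _ => X) x
  | S r' => fun x => Fin.caseS' x (fun _ => X) (g (fst (unpair c))) (fun y => vdec r' g (snd (unpair c)) y)
  end.

Lemma vdec_surj r (g : nat -> X) (h : Fin.t r -> X) :
  (forall x, exists c, g c = h x) -> exists c, vdec r g c = h.
Proof.
  revert h; induction r; intros h H.
  - exists O; apply functional_extensionality; intros x; apply (Fin.case0 (fun x => _ = h x) x).
  - destruct (H Fin.F1) as [c1 H1].
    destruct (IHr (fun y => h (Fin.FS y)) (fun y => H (Fin.FS y))) as [c2 H2].
    destruct (unpair_surj c1 c2) as [c Hc]. exists c.
    apply functional_extensionality; intros x.
    apply (Fin.caseS' x (fun x => vdec (S r) g c x = h x)); simpl; rewrite Hc; simpl; auto.
    intros y; rewrite H2; auto.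
Qed.
End Enum.

Section EnumF.
Variable L : Language.
Variable ef : Fsym L -> nat.
Hypothesis ef_inj : forall f g, ef f = ef g -> f = g.
Variable er : Rsym L -> nat.
Hypothesis er_inj : forall f g, er f = er g -> f = g.

Definition fdec (n : nat) : option (Fsym L) :=
  match excluded_middle_informative (exists f, ef f = n) with
  | left h => Some (proj1_sig (constructive_indefinite_description _ h))
  | right _ => None
  end.

Lemma fdec_ef f : fdec (ef f) = Some f.
Proof.
  unfold fdec; destruct excluded_middle_informative as [h|h]; [|exfalso; apply h; exists f; auto].
  destruct (constructive_indefinite_description _ h) as [g Hg]; simpl; f_equal; auto.
Qed.

Definition rdec (n : nat) : option (Rsym L) :=
  match excluded_middle_informative (exists f, er f = n) with
  | left h => Some (proj1_sig (constructive_indefinite_description _ h))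
  | right _ => None
  end.

Lemma rdec_er f : rdec (er f) = Some f.
Proof.
  unfold rdec; destruct excluded_middle_informative as [h|h]; [|exfalso; apply h; exists f; auto].
  destruct (constructive_indefinite_description _ h) as [g Hg]; simpl; f_equal; auto.
Qed.

Fixpoint tdec (k c : nat) : term L :=
  match k with
  | O => tvar L O
  | S k' =>
    match fst (unpair c) with
    | O => tvar L (snd (unpair c))
    | S _ => match fdec (fst (unpair (snd (unpair c)))) with
             | None => tvar L O
             | Some f => tapp f (vdec (term L) (farity L f) (tdec k') (snd (unpair (snd (unpair c)))))
             end
    end
  end.

Lemma tdec_surj t : exists K, forall k, (K <= k)%nat -> exists c, tdec k c = t.
Proof.
  induction t as [n|f args IH].
  - exists 1%nat; intros k Hk; destruct k; [lia|].
    destruct (unpair_surj O n) as [c Hc]; exists c; simpl; rewrite Hc; auto.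
  - destruct (fin_bound (fun x k => exists c, tdec k c = args x) IH) as [K HK].
    exists (S K); intros k Hk; destruct k; [lia|].
    destruct (vdec_surj _ (farity L f) (tdec k) args (fun x => HK x k ltac:(lia))) as [ac Hac].
    destruct (unpair_surj (ef f) ac) as [c1 Hc1].
    destruct (unpair_surj 1 c1) as [c Hc].
    exists c; simpl; rewrite Hc; simpl; rewrite Hc1; simpl; rewrite fdec_ef; rewrite Hac; auto.
Qed.

Definition tdecA (c : nat) : term L := tdec (fst (unpair c)) (snd (unpair c)).

Lemma tdecA_surj t : exists c, tdecA c = t.
Proof.
  destruct (tdec_surj t) as [K HK]; destruct (HK K (le_n _)) as [c Hc].
  destruct (unpair_surj K c) as [n Hn]; exists n; unfold tdecA; rewrite Hn; auto.
Qed.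

Fixpoint fdecF (k c : nat) : formula L :=
  match k with
  | O => fFalse L
  | S k' =>
    let tag := fst (unpair c) in
    let rest := snd (unpair c) in
    let x := fst (unpair rest) in
    let y := snd (unpair rest) in
    match tag with
    | 0 => fFalse L
    | 1 => fEq (tdecA x) (tdecA y)
    | 2 => match rdec x with None => fFalse L | Some r => fRel r (vdec (term L) (rarity L r) tdecA y) end
    | 3 => fNot (fdecF k' rest)
    | 4 => fAnd (fdecF k' x) (fdecF k' y)
    | 5 => fOr (fdecF k' x) (fdecF k' y)
    | 6 => fImp (fdecF k' x) (fdecF k' y)
    | 7 => fEx x (fdecF k' y)
    | _ => fAll x (fdecF k' y)
    end
  end.

Lemma fdecF_surj p : exists K, forall k, (K <= k)%nat -> exists c, fdecF k c = p.
Proof.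
  induction p.
  - exists O; intros k Hk; exists O; destruct k; simpl; auto.
  - exists 1%nat; intros k Hk; destruct k; [lia|].
    destruct (tdecA_surj t) as [x Hx]; destruct (tdecA_surj t0) as [y Hy].
    destruct (unpair_surj x y) as [c1 Hc1]; destruct (unpair_surj 1 c1) as [c Hc].
    exists c; simpl; rewrite Hc; simpl; rewrite Hc1; simpl; rewrite Hx, Hy; auto.
  - exists 1%nat; intros k Hk; destruct k; [lia|].
    destruct (vdec_surj _ (rarity L r) tdecA t (fun x => tdecA_surj (t x))) as [y Hy].
    destruct (unpair_surj (er r) y) as [c1 Hc1]; destruct (unpair_surj 2 c1) as [c Hc].
    exists c; simpl; rewrite Hc; simpl; rewrite Hc1; simpl; rewrite rdec_er, Hy; auto.
  - destruct IHp as [K HK]; exists (S K); intros k Hk; destruct k; [lia|].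
    destruct (HK k ltac:(lia)) as [x Hx].
    destruct (unpair_surj 3 x) as [c Hc].
    exists c; simpl; rewrite Hc; simpl; rewrite Hx; auto.
  - destruct IHp1 as [K1 HK1]; destruct IHp2 as [K2 HK2]; exists (S (K1 + K2)); intros k Hk; destruct k; [lia|].
    destruct (HK1 k ltac:(lia)) as [x Hx]; destruct (HK2 k ltac:(lia)) as [y Hy].
    destruct (unpair_surj x y) as [c1 Hc1]; destruct (unpair_surj 4 c1) as [c Hc].
    exists c; simpl; rewrite Hc; simpl; rewrite Hc1; simpl; rewrite Hx, Hy; auto.
  - destruct IHp1 as [K1 HK1]; destruct IHp2 as [K2 HK2]; exists (S (K1 + K2)); intros k Hk; destruct k; [lia|].
    destruct (HK1 k ltac:(lia)) as [x Hx]; destruct (HK2 k ltac:(lia)) as [y Hy].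
    destruct (unpair_surj x y) as [c1 Hc1]; destruct (unpair_surj 5 c1) as [c Hc].
    exists c; simpl; rewrite Hc; simpl; rewrite Hc1; simpl; rewrite Hx, Hy; auto.
  - destruct IHp1 as [K1 HK1]; destruct IHp2 as [K2 HK2]; exists (S (K1 + K2)); intros k Hk; destruct k; [lia|].
    destruct (HK1 k ltac:(lia)) as [x Hx]; destruct (HK2 k ltac:(lia)) as [y Hy].
    destruct (unpair_surj x y) as [c1 Hc1]; destruct (unpair_surj 6 c1) as [c Hc].
    exists c; simpl; rewrite Hc; simpl; rewrite Hc1; simpl; rewrite Hx, Hy; auto.
  - destruct IHp as [K HK]; exists (S K); intros k Hk; destruct k; [lia|].
    destruct (HK k ltac:(lia)) as [y Hy].
    destruct (unpair_surj n y) as [c1 Hc1]; destruct (unpair_surj 7 c1) as [c Hc].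
    exists c; simpl; rewrite Hc; simpl; rewrite Hc1; simpl; rewrite Hy; auto.
  - destruct IHp as [K HK]; exists (S K); intros k Hk; destruct k; [lia|].
    destruct (HK k ltac:(lia)) as [y Hy].
    destruct (unpair_surj n y) as [c1 Hc1]; destruct (unpair_surj 8 c1) as [c Hc].
    exists c; simpl; rewrite Hc; simpl; rewrite Hc1; simpl; rewrite Hy; auto.
Qed.

End EnumF.

Lemma formula_enum (L : Language) : countable_language L ->
  exists E : nat -> formula L, forall p, exists n, E n = p.
Proof.
  intros [[ef Hf] [er Hr]].
  exists (fun n => fdecF L ef er (fst (unpair n)) (snd (unpair n))).
  intros p. destruct (fdecF_surj L ef Hf er Hr p) as [K HK]. destruct (HK K (le_n _)) as [c Hc].
  destruct (unpair_surj K c) as [n Hn]; exists n; rewrite Hn; auto.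
Qed.


Unset Implicit Arguments.
Open Scope nat_scope.

Lemma parity (m : nat) : (Nat.even m = true /\ m = 2 * Nat.div2 m) \/ (Nat.even m = false /\ m = 2 * Nat.div2 m + 1).
Proof.
  pose proof (Nat.div2_odd m) as H. rewrite <- Nat.negb_even in H.
  destruct (Nat.even m); simpl in H; [left|right]; split; auto; lia.
Qed.

Section Types.
Variable L : Language.

Lemma pe_even (M : Structure L) a b i : pair_env M a b (2 * i) = a i.
Proof. unfold pair_env; rewrite Nat.even_even, Nat.div2_double; auto. Qed.
Lemma pe_odd (M : Structure L) a b i : pair_env M a b (2 * i + 1) = b i.
Proof. unfold pair_env; rewrite Nat.even_odd, Nat.div2_odd'; auto. Qed.
Lemma pe_gen (M : Structure L) a b m : pair_env M a b m = if Nat.even m then a (Nat.div2 m) else b (Nat.div2 m).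
Proof. reflexivity. Qed.

Definition eqf (i j : nat) : formula L := fEq (tvar L i) (tvar L j).

Lemma tp_eqf (M : Structure L) a b i j : tp2 M a b (eqf (2 * i) (2 * j + 1)) <-> a i = b j.
Proof. unfold tp2, eqf; cbn [sat eval]; rewrite pe_even, pe_odd; tauto. Qed.

Definition rt (m : nat) := 2 * Nat.div2 m.
Definition rs (m : nat) := 2 * Nat.div2 m + 1.
Definition ri (m : nat) := if Nat.even m then m + 1 else m - 1.
Definition tmap (p : ptype L) : ptype L := fun phi => p (rn rt phi).
Definition smap (p : ptype L) : ptype L := fun phi => p (rn rs phi).
Definition imap (p : ptype L) : ptype L := fun phi => p (rn ri phi).

Lemma tp_ext (M : Structure L) a b (M' : Structure L) a' b' :
  (forall phi, tp2 M a b phi <-> tp2 M' a' b' phi) -> tp2 M a b = tp2 M' a' b'.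
Proof. intros H; apply functional_extensionality; intros; apply propositional_extensionality; auto. Qed.

Lemma t_tp (M : Structure L) a b : tmap (tp2 M a b) = tp2 M a a.
Proof.
  apply functional_extensionality; intros phi; apply propositional_extensionality.
  unfold tmap, tp2; rewrite sat_rn; apply sat_ext; intros m; cbv beta; unfold rt.
  rewrite pe_even, pe_gen; destruct (Nat.even m); auto.
Qed.
Lemma s_tp (M : Structure L) a b : smap (tp2 M a b) = tp2 M b b.
Proof.
  apply functional_extensionality; intros phi; apply propositional_extensionality.
  unfold smap, tp2; rewrite sat_rn; apply sat_ext; intros m; cbv beta; unfold rs.
  rewrite pe_odd, pe_gen; destruct (Nat.even m); auto.
Qed.
Lemma i_tp (M : Structure L) a b : imap (tp2 M a b) = tp2 M b a.
Proof.
  apply functional_extensionality; intros phi; apply propositional_extensionality.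
  unfold imap, tp2; rewrite sat_rn; apply sat_ext; intros m; cbv beta; unfold ri.
  destruct (parity m) as [[E H]|[E H]]; rewrite E.
  - rewrite H at 1; rewrite pe_odd. rewrite H at 2. rewrite pe_even; auto.
  - replace (m - 1) with (2 * Nat.div2 m) by lia. rewrite pe_even. rewrite H at 2; rewrite pe_odd; auto.
Qed.

Definition alpha (p : ptype L) (i : nat) : nat := least (fun j => p (eqf (2 * i) (2 * j + 1))).
Definition beta (p : ptype L) (j : nat) : nat := least (fun i => p (eqf (2 * i) (2 * j + 1))).

Lemma alpha_tp (M : Structure L) a b i : (exists j, a i = b j) -> a i = b (alpha (tp2 M a b) i).
Proof.
  intros [j Hj]. unfold alpha. apply tp_eqf. apply (least_spec (fun j => tp2 M a b (eqf (2 * i) (2 * j + 1)))).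
  exists j; rewrite tp_eqf; auto.
Qed.
Lemma beta_tp (M : Structure L) a b j : (exists i, a i = b j) -> a (beta (tp2 M a b) j) = b j.
Proof.
  intros [i Hi]. unfold beta. apply tp_eqf. apply (least_spec (fun i => tp2 M a b (eqf (2 * i) (2 * j + 1)))).
  exists i; rewrite tp_eqf; auto.
Qed.

Definition mrho (p q : ptype L) (m : nat) : nat :=
  if Nat.even m then 2 * alpha p (Nat.div2 m) else 2 * beta q (Nat.div2 m).
Definition mulnat (p q : ptype L) : ptype L := fun phi => smap p (rn (mrho p q) phi).

Lemma mulnat_tp (M : Structure L) a b c :
  (forall i, exists j, a i = b j) -> (forall j, exists i, b i = c j) ->
  mulnat (tp2 M a b) (tp2 M b c) = tp2 M a c.
Proof.
  intros H1 H2. apply functional_extensionality; intros phi; apply propositional_extensionality.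
  unfold mulnat, smap, tp2; rewrite sat_rn, sat_rn; apply sat_ext; intros m.
  unfold rs, mrho. rewrite (pe_gen M a c m).
  destruct (Nat.even m).
  - rewrite Nat.div2_double, pe_odd. symmetry; apply alpha_tp; auto.
  - rewrite Nat.div2_double, pe_odd. apply beta_tp; auto.
Qed.

Lemma tp_rn (M : Structure L) a b rho phi : tp2 M a b (rn rho phi) <-> sat M (fun m => pair_env M a b (rho m)) phi.
Proof. unfold tp2; apply sat_rn. Qed.

Section WithPhi.
Variable Phi : seq_formulas L.

Definition DF (k : nat) : formula L := fImp (fEx 0 (Phi k)) (Phi k).
Definition rhoDx (k m : nat) : nat := match m with O => 2 * k | S i => 2 * i end.
Definition rhoDy (k m : nat) : nat := match m with O => 2 * k + 1 | S i => 2 * i + 1 end.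
Definition Dxf (k : nat) : formula L := rn (rhoDx k) (DF k).
Definition Dyf (k : nat) : formula L := rn (rhoDy k) (DF k).
Definition Dx (p : ptype L) : Prop := forall k, p (Dxf k).
Definition Dy (p : ptype L) : Prop := forall k, p (Dyf k).
Definition SE (p : ptype L) : Prop :=
  (forall i, exists j, p (eqf (2 * i) (2 * j + 1))) /\ (forall j, exists i, p (eqf (2 * i) (2 * j + 1))).

Definition Dk (M : Structure L) (a : nat -> dom M) (k : nat) : Prop :=
  forall c, sat M (env_xy M a c) (Phi k) -> sat M (env_xy M a (a k)) (Phi k).

Lemma Dxk_tp (M : Structure L) a b k : tp2 M a b (Dxf k) <-> Dk M a k.
Proof.
  unfold Dxf, Dk, tp2; rewrite sat_rn; unfold DF; simpl.
  assert (E1 : forall c, sat M (upd M (fun m => pair_env M a b (rhoDx k m)) 0 c) (Phi k) <-> sat M (env_xy M a c) (Phi k)).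
  { intros c; apply sat_ext; intros [|m]; unfold upd, env_xy, rhoDx; simpl; auto. apply pe_even. }
  assert (E2 : sat M (fun m => pair_env M a b (rhoDx k m)) (Phi k) <-> sat M (env_xy M a (a k)) (Phi k)).
  { apply sat_ext; intros [|m]; unfold env_xy, rhoDx; apply pe_even. }
  rewrite E2. split.
  - intros H c Hc; apply H; exists c; apply E1; auto.
  - intros H [c Hc]; apply (H c); apply E1; auto.
Qed.

Lemma Dyk_tp (M : Structure L) a b k : tp2 M a b (Dyf k) <-> Dk M b k.
Proof.
  unfold Dyf, Dk, tp2; rewrite sat_rn; unfold DF; simpl.
  assert (E1 : forall c, sat M (upd M (fun m => pair_env M a b (rhoDy k m)) 0 c) (Phi k) <-> sat M (env_xy M b c) (Phi k)).
  { intros c; apply sat_ext; intros [|m]; unfold upd, env_xy, rhoDy; simpl; auto. apply pe_odd. }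
  assert (E2 : sat M (fun m => pair_env M a b (rhoDy k m)) (Phi k) <-> sat M (env_xy M b (b k)) (Phi k)).
  { apply sat_ext; intros [|m]; unfold env_xy, rhoDy; apply pe_odd. }
  rewrite E2. split.
  - intros H c Hc; apply H; exists c; apply E1; auto.
  - intros H [c Hc]; apply (H c); apply E1; auto.
Qed.

Lemma Dx_tp (M : Structure L) a b : Dx (tp2 M a b) <-> realises_D Phi M a.
Proof. unfold Dx, realises_D; split; intros H k; specialize (H k); [apply Dxk_tp in H|apply Dxk_tp]; auto. Qed.
Lemma Dy_tp (M : Structure L) a b : Dy (tp2 M a b) <-> realises_D Phi M b.
Proof. unfold Dy, realises_D; split; intros H k; specialize (H k); [apply Dyk_tp in H|apply Dyk_tp]; auto. Qed.
Lemma SE_tp (M : Structure L) a b : SE (tp2 M a b) <-> same_entries M a b.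
Proof.
  unfold SE, same_entries; split; intros [H1 H2]; split.
  - intros i; destruct (H1 i) as [j Hj]; rewrite tp_eqf in Hj; eauto.
  - intros j; destruct (H2 j) as [i Hi]; rewrite tp_eqf in Hi; exists i; auto.
  - intros i; destruct (H1 i) as [j Hj]; exists j; rewrite tp_eqf; auto.
  - intros j; destruct (H2 j) as [i Hi]; exists i; rewrite tp_eqf; auto.
Qed.

Variable T : theory L.

Definition isTp (p : ptype L) : Prop := exists M, is_model T M /\ exists a b, p = tp2 M a b.

Lemma Gset_iff p : Gset T Phi p <-> isTp p /\ Dx p /\ Dy p /\ SE p.
Proof.
  split.
  - intros [M [HM [a [b [Ha [Hb [Hs E]]]]]]]; subst p.
    split; [exists M; split; auto; exists a, b; auto|].
    split; [apply Dx_tp; auto|]; split; [apply Dy_tp; auto|]; apply SE_tp; auto.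
  - intros [[M [HM [a [b E]]]] [H1 [H2 H3]]]; subst p.
    exists M; split; auto; exists a, b.
    split; [apply (Dx_tp M a b); auto|]; split; [apply (Dy_tp M a b); auto|]; split; auto; apply SE_tp; auto.
Qed.

Lemma G_intro (M : Structure L) a b : is_model T M -> realises_D Phi M a -> realises_D Phi M b ->
  same_entries M a b -> Gset T Phi (tp2 M a b).
Proof. intros; exists M; split; auto; exists a, b; auto. Qed.

Lemma se_sym (M : Structure L) a b : same_entries M a b -> same_entries M b a.
Proof. intros [H1 H2]; split; auto. Qed.

Lemma se_trans (M : Structure L) a b c : same_entries M a b -> same_entries M b c -> same_entries M a c.
Proof.
  intros [H1 H2] [H3 H4]; split.
  - intros i; destruct (H1 i) as [j Hj]; destruct (H3 j) as [k Hk]; exists k; congruence.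
  - intros i; destruct (H4 i) as [j Hj]; destruct (H2 j) as [k Hk]; exists k; congruence.
Qed.

Lemma glue_t p (M : Structure L) b : Gset T Phi p -> realises_D Phi M b -> tmap p = tp2 M b b ->
  exists c, p = tp2 M b c /\ realises_D Phi M c /\ same_entries M b c.
Proof.
  intros HG Hb Ht.
  destruct HG as [M' [HM' [x [y [Hx [Hy [Hse E]]]]]]]. subst p.
  rewrite t_tp in Ht.
  set (c := fun j => b (beta (tp2 M' x y) j)).
  set (rho := fun m => if Nat.even m then m else 2 * beta (tp2 M' x y) (Nat.div2 m)).
  assert (Ec : tp2 M' x y = tp2 M b c).
  { apply functional_extensionality; intros phi; apply propositional_extensionality.
    transitivity (tp2 M' x x (rn rho phi)).
    - rewrite tp_rn; unfold tp2; apply sat_ext; intros m; cbv beta. unfold rho.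
      rewrite (pe_gen M' x y m). destruct (parity m) as [[E1 E2]|[E1 E2]]; rewrite E1.
      + rewrite E2 at 2; rewrite pe_even; auto.
      + rewrite pe_even. symmetry. apply beta_tp. destruct Hse as [_ H2]. destruct (H2 (Nat.div2 m)) as [i Hi]; exists i; auto.
    - rewrite Ht, tp_rn. unfold tp2; apply sat_ext; intros m; cbv beta. unfold rho.
      rewrite (pe_gen M b c m). destruct (parity m) as [[E1 E2]|[E1 E2]]; rewrite E1.
      + rewrite E2 at 1; rewrite pe_even; auto.
      + rewrite pe_even; auto. }
  exists c; split; auto.
  assert (HG : Dy (tp2 M' x y) /\ SE (tp2 M' x y)) by (split; [apply Dy_tp|apply SE_tp]; auto).
  rewrite Ec in HG. destruct HG as [H1 H2]. split; [apply Dy_tp in H1|apply SE_tp in H2]; auto.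
Qed.

Lemma imap_imap p : isTp p -> imap (imap p) = p.
Proof. intros [M [_ [a [b E]]]]; subst; rewrite !i_tp; auto. Qed.

Lemma G_inv p : Gset T Phi p -> Gset T Phi (imap p).
Proof.
  intros [M [HM [x [y [Hx [Hy [Hse E]]]]]]]; subst p. rewrite i_tp. apply G_intro; auto. apply se_sym; auto.
Qed.

Lemma glue_s p (M : Structure L) b : Gset T Phi p -> realises_D Phi M b -> smap p = tp2 M b b ->
  exists a, p = tp2 M a b /\ realises_D Phi M a /\ same_entries M a b.
Proof.
  intros HG Hb Hs.
  assert (Ht : tmap (imap p) = tp2 M b b).
  { destruct HG as [M' [HM' [x [y [Hx [Hy [Hse E]]]]]]]; subst p. rewrite i_tp, t_tp. rewrite s_tp in Hs; auto. }
  destruct (glue_t (imap p) M b (G_inv p HG) Hb Ht) as [a [E [Ha Hse]]].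
  exists a; split; [|split; auto; apply se_sym; auto].
  rewrite <- (imap_imap p); [rewrite E, i_tp; auto|].
  apply Gset_iff in HG; apply HG.
Qed.

Lemma compose_real p q : Gset T Phi p -> Gset T Phi q -> smap p = tmap q ->
  exists M, is_model T M /\ exists a b c, realises_D Phi M a /\ realises_D Phi M b /\ realises_D Phi M c /\
    same_entries M a b /\ same_entries M b c /\ p = tp2 M a b /\ q = tp2 M b c.
Proof.
  intros Hp Hq E.
  destruct Hp as [M [HM [a [b [Ha [Hb [Hse Ep]]]]]]]; subst p.
  rewrite s_tp in E. destruct (glue_t q M b Hq Hb (eq_sym E)) as [c [Eq [Hc Hse2]]].
  exists M; split; auto; exists a, b, c; repeat split; auto; try apply Hse; try apply Hse2.
Qed.

End WithPhi.
End Types.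


Unset Implicit Arguments.
Open Scope nat_scope.

Section Rich.
Variable L : Language.
Variable Phi : seq_formulas L.
Hypothesis HPhi : rich Phi.

Lemma TV (p : formula L) (v : nat) (tau : nat -> nat) :
  exists n, forall (M : Structure L) (b : nat -> dom M), realises_D Phi M b ->
    forall e : nat -> dom M, (forall m, occurs_free m p -> m <> v -> e m = b (tau m)) ->
    (exists c, sat M (upd M e v c) p) -> sat M (upd M e v (b n)) p.
Proof.
  set (rho := fun m => if Nat.eqb m v then 0 else S (tau m)).
  assert (Hfv : fv_below (S (mx tau (fb p))) (rn rho p)).
  { intros m Hm. destruct (occurs_rn p m rho Hm) as [m' [H1 H2]]. subst m. unfold rho.
    destruct (Nat.eqb m' v); [lia|]. pose proof (mx_ge tau (occurs_free_lt m' p H1)). lia. }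
  destruct HPhi as [_ Hr]. destruct (Hr _ _ Hfv) as [n [_ Hn]].
  exists n. intros M b Hb e He [c Hc].
  assert (Eq : forall c, sat M (upd M e v c) p <-> sat M (env_xy M b c) (Phi n)).
  { intros c'. rewrite Hn, sat_rn. apply sat_coinc. intros m Hm. unfold upd, rho, env_xy.
    destruct (Nat.eqb m v) eqn:E; auto. apply Nat.eqb_neq in E. apply He; auto. }
  apply Eq. apply (Hb n c). apply Eq; auto.
Qed.

Definition freepos (n j : nat) : nat :=
  epsilon (inhabits 0) (fun k => n + 1 + j <= k /\ Phi k = fEq (tvar L (n+1+j)) (tvar L (n+1+j))).

Lemma freepos_spec n j : n + 1 + j <= freepos n j /\ Phi (freepos n j) = fEq (tvar L (n+1+j)) (tvar L (n+1+j)).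
Proof.
  unfold freepos; apply epsilon_spec. destruct HPhi as [_ Hr]. apply Hr.
  intros m Hm. simpl in Hm. destruct Hm as [Hm|Hm]; lia.
Qed.

Lemma freepos_inj n j j' : freepos n j = freepos n j' -> j = j'.
Proof.
  intros E. pose proof (proj2 (freepos_spec n j)) as A. pose proof (proj2 (freepos_spec n j')) as B.
  rewrite E in A. rewrite A in B. injection B; lia.
Qed.

Section ExtDef.
Variable M : Structure L.
Variable Sx : dom M -> Prop.
Variable en : nat -> dom M.
Variable s : nat -> dom M.
Variable n : nat.

Definition chx (k : nat) (g : nat -> dom M) : dom M :=
  if lt_dec k n then s k else
  match excluded_middle_informative (exists j, freepos n j = k) with
  | left _ => en (epsilon (inhabits 0) (fun j => freepos n j = k))
  | right _ =>
    match excluded_middle_informative (exists c, Sx c /\ sat M (env_xy M g c) (Phi k)) with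
    | left h => proj1_sig (constructive_indefinite_description _ h)
    | right _ => en 0
    end
  end.

Fixpoint Fx (k : nat) : nat -> dom M :=
  match k with
  | O => fun i => if lt_dec i n then s i else en 0
  | S k' => fun i => if Nat.eq_dec i k' then chx k' (Fx k') else Fx k' i
  end.

Definition ax (i : nat) : dom M := Fx (S i) i.

Lemma Fx_stable i k : i < k -> Fx k i = ax i.
Proof.
  induction k; intros H; [lia|]. unfold ax. simpl.
  destruct (Nat.eq_dec i k); [subst; simpl; destruct (Nat.eq_dec k k); [auto|congruence]|].
  rewrite IHk; [|lia]. unfold ax; simpl. destruct (Nat.eq_dec i i); congruence.
Qed.

Lemma ax_eq i : ax i = chx i (Fx i).
Proof. unfold ax; simpl; destruct (Nat.eq_dec i i); congruence. Qed.

End ExtDef.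

Lemma Ext (M : Structure L) (Sx : dom M -> Prop) (en : nat -> dom M) (s : nat -> dom M) (n : nat) :
  (forall j, Sx (en j)) ->
  (forall k (f : nat -> dom M), (forall i, i < k -> Sx (f i)) -> (exists c, sat M (env_xy M f c) (Phi k)) ->
      exists c, Sx c /\ sat M (env_xy M f c) (Phi k)) ->
  (forall i, i < n -> Sx (s i)) ->
  (forall k, k < n -> forall c, sat M (env_xy M s c) (Phi k) -> sat M (env_xy M s (s k)) (Phi k)) ->
  exists a, (forall i, i < n -> a i = s i) /\ realises_D Phi M a /\ (forall i, Sx (a i)) /\
            (forall j, exists i, a i = en j).
Proof.
  intros Hen HTV Hs HD.
  assert (HS : forall k i, Sx (Fx M Sx en s n k i)).
  { induction k; intros i; simpl.
    - destruct (lt_dec i n); auto.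
    - destruct (Nat.eq_dec i k); auto. unfold chx. destruct (lt_dec k n); auto.
      destruct excluded_middle_informative; auto. destruct excluded_middle_informative as [h|h]; auto.
      exact (proj1 (proj2_sig (constructive_indefinite_description _ h))). }
  assert (Hpre : forall i, i < n -> ax M Sx en s n i = s i).
  { intros i Hi. rewrite ax_eq. unfold chx. destruct (lt_dec i n); [auto|lia]. }
  exists (ax M Sx en s n). split; [auto|]. split; [|split].
  - intros k c.
    assert (Eq : forall c', sat M (env_xy M (ax M Sx en s n) c') (Phi k) <-> sat M (env_xy M (Fx M Sx en s n k) c') (Phi k)).
    { intros c'. apply sat_coinc. intros m Hm. destruct HPhi as [HP _]. specialize (HP k m Hm).
      destruct m; simpl; auto. symmetry; apply Fx_stable; lia. }
    rewrite Eq, Eq. intros Hc.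
    rewrite ax_eq. unfold chx. destruct (lt_dec k n) as [Hk|Hk].
    + assert (Eq2 : forall c', sat M (env_xy M (Fx M Sx en s n k) c') (Phi k) <-> sat M (env_xy M s c') (Phi k)).
      { intros c'. apply sat_coinc. intros m Hm. destruct HPhi as [HP _]. specialize (HP k m Hm).
        destruct m; simpl; auto. rewrite Fx_stable by lia. apply Hpre; lia. }
      rewrite Eq2 in *. apply (HD k Hk c); auto.
    + destruct excluded_middle_informative as [[j Hj]|Hj].
      * rewrite <- Hj. rewrite (proj2 (freepos_spec n j)). simpl; auto.
      * destruct excluded_middle_informative as [h|h].
        -- exact (proj2 (proj2_sig (constructive_indefinite_description _ h))).
        -- exfalso; apply h. apply HTV; [intros; apply HS|exists c; auto].
  - intros i; unfold ax; apply HS.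
  - intros j. exists (freepos n j). rewrite ax_eq. unfold chx.
    pose proof (proj1 (freepos_spec n j)).
    destruct (lt_dec (freepos n j) n); [lia|].
    destruct excluded_middle_informative as [h|h]; [|exfalso; apply h; exists j; auto].
    f_equal. apply (freepos_inj n). apply (epsilon_spec (inhabits 0) (fun j0 => freepos n j0 = freepos n j)). exists j; auto.
Qed.

Lemma Ext2 (M : Structure L) (b s : nat -> dom M) (n : nat) :
  realises_D Phi M b ->
  (forall i, i < n -> exists j, s i = b j) ->
  (forall k, k < n -> forall c, sat M (env_xy M s c) (Phi k) -> sat M (env_xy M s (s k)) (Phi k)) ->
  exists a, (forall i, i < n -> a i = s i) /\ realises_D Phi M a /\ same_entries M a b.
Proof.
  intros Hb Hs HD.
  destruct (Ext M (fun x => exists j, x = b j) b s n) as [a [H1 [H2 [H3 H4]]]]; auto.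
  - intros j; exists j; auto.
  - intros k f Hf [c Hc].
    set (tau := fun m => match m with O => O | S i => epsilon (inhabits 0) (fun j => f i = b j) end).
    destruct (TV (Phi k) 0 tau) as [w Hw].
    exists (b w); split; [exists w; auto|].
    assert (E : forall c', env_xy M f c' = upd M (env_xy M f c) 0 c').
    { intros c'; apply functional_extensionality; intros [|m]; reflexivity. }
    rewrite E. apply (Hw M b Hb).
    + intros m Hm Hm0. destruct m; [congruence|]. simpl. destruct HPhi as [HP _]. specialize (HP k _ Hm).
      apply (epsilon_spec (inhabits 0) (fun j => f m = b j)). apply Hf; lia.
    + exists c; rewrite <- E; auto.
  - exists a; split; auto; split; auto; split;
      [intros i; destruct (H3 i) as [j Hj]; exists j; auto | intros j; destruct (H4 j) as [i Hi]; exists i; symmetry; auto].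
Qed.

Lemma Ext1 (M : Structure L) : exists a, realises_D Phi M a.
Proof.
  destruct (dom_inhabited M) as [d].
  destruct (Ext M (fun _ => True) (fun _ => d) (fun _ => d) 0) as [a [_ [Ha _]]]; auto; try (intros; lia).
  - intros k f _ [c Hc]; exists c; auto.
  - exists a; auto.
Qed.

End Rich.


Unset Implicit Arguments.
Open Scope nat_scope.

Section Limit.
Variable L : Language.
Variable Phi : seq_formulas L.
Hypothesis HPhi : rich Phi.
Variable T : theory L.
Variable Ms : nat -> Structure L.
Variable a : forall k, nat -> dom (Ms k).
Variable e : forall k, nat -> dom (Ms k).
Hypothesis HM : forall k, is_model T (Ms k).
Hypothesis Ha : forall k, realises_D Phi (Ms k) (a k).
Hypothesis He : forall m, exists i, ev (fun k => e k m = a k i).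
Hypothesis Hea : forall k i, e k (2 * i) = a k i.
Hypothesis Hconv : forall phi, ev (fun k => sat (Ms k) (e k) phi) \/ ev (fun k => ~ sat (Ms k) (e k) phi).

Definition es (sigma : nat -> nat) (k : nat) : nat -> dom (Ms k) := fun m => e k (sigma m).

Lemma conv_s sigma phi : ev (fun k => sat (Ms k) (es sigma k) phi) \/ ev (fun k => ~ sat (Ms k) (es sigma k) phi).
Proof.
  destruct (Hconv (rn sigma phi)) as [H|H]; [left|right]; revert H; apply ev_mono; intros k;
  rewrite sat_rn; auto.
Qed.

Lemma wit phi v sigma : ev (fun k => exists c, sat (Ms k) (upd (Ms k) (es sigma k) v c) phi) ->
  exists j, ev (fun k => sat (Ms k) (es (updn sigma v j) k) phi).
Proof.
  intros Hc.
  set (tau := fun m => epsilon (inhabits 0) (fun i => ev (fun k => e k (sigma m) = a k i))).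
  assert (Htau : forall m, ev (fun k => e k (sigma m) = a k (tau m))).
  { intros m; apply (epsilon_spec (inhabits 0) (fun i => ev (fun k => e k (sigma m) = a k i))); apply He. }
  destruct (TV L Phi HPhi phi v tau) as [n Hn].
  exists (2 * n).
  pose proof (@ev_lt (fb phi) (fun m k => e k (sigma m) = a k (tau m)) (fun m _ => Htau m)) as H1.
  pose proof (ev_and Hc H1) as H2. revert H2; apply ev_mono; intros k [Hk1 Hk2].
  assert (E : forall m, es (updn sigma v (2 * n)) k m = upd (Ms k) (es sigma k) v (a k n) m).
  { intros m; unfold es, updn, upd. destruct (Nat.eqb m v); auto. }
  rewrite (sat_ext _ _ _ _ E). apply (Hn (Ms k) (a k) (Ha k)); auto.
  intros m Hm _. apply Hk2. apply occurs_free_lt; auto.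
Qed.

Definition Rk (i j : nat) : Prop := ev (fun k => e k i = e k j).

Lemma R_refl i : Rk i i.
Proof. apply ev_true; auto. Qed.
Lemma R_sym i j : Rk i j -> Rk j i.
Proof. apply ev_mono; auto. Qed.
Lemma R_trans i j l : Rk i j -> Rk j l -> Rk i l.
Proof. intros H1 H2; pose proof (ev_and H1 H2) as H3; revert H3; apply ev_mono; intros k [A B]; congruence. Qed.

Definition D : Type := {C : nat -> Prop | exists i, C = Rk i}.
Definition cls (i : nat) : D := exist _ (Rk i) (ex_intro _ i eq_refl).
Definition rep (C : D) : nat := epsilon (inhabits 0) (fun i => proj1_sig C = Rk i).

Lemma rep_spec C : proj1_sig C = Rk (rep C).
Proof. unfold rep; apply epsilon_spec; apply (proj2_sig C). Qed.

Lemma cls_rep C : cls (rep C) = C.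
Proof.
  pose proof (rep_spec C) as E. destruct C as [P HP]. simpl in E.
  unfold cls. apply subset_eq_compat. symmetry; exact E.
Qed.

Lemma cls_eq i j : cls i = cls j <-> Rk i j.
Proof.
  split.
  - intros E. apply (f_equal (@proj1_sig _ _)) in E. simpl in E.
    rewrite E. apply R_refl.
  - intros H. unfold cls.
    assert (E : Rk i = Rk j).
    { apply functional_extensionality; intros x; apply propositional_extensionality; split; intros Hx.
      - apply (R_trans j i x); auto; apply R_sym; auto.
      - apply (R_trans i j x); auto. }
    apply subset_eq_compat. exact E.
Qed.

Lemma rep_cls i : Rk (rep (cls i)) i.
Proof. pose proof (rep_spec (cls i)) as E; simpl in E. rewrite <- E. apply R_refl. Qed.

Definition W (f : Fsym L) (g : Fin.t (farity L f) -> nat) : nat :=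
  epsilon (inhabits 0) (fun j => ev (fun k => e k j = fint (Ms k) f (fun x => e k (g x)))).

Lemma W_spec f g : ev (fun k => e k (W f g) = fint (Ms k) f (fun x => e k (g x))).
Proof.
  unfold W; apply (epsilon_spec (inhabits 0) (fun j => ev (fun k => e k j = fint (Ms k) f (fun x => e k (g x))))).
  set (phi := fEq (tvar L 0) (tapp f (fun x => tvar L (S (proj1_sig (Fin.to_nat x)))))).
  set (sigma := fun m => match m with O => O | S m' =>
                  match lt_dec m' (farity L f) with left h => g (Fin.of_nat_lt h) | right _ => O end end).
  assert (Hs : forall k x, es sigma k (S (proj1_sig (Fin.to_nat x))) = e k (g x)).
  { intros k x. unfold es, sigma. destruct (lt_dec (proj1_sig (Fin.to_nat x)) (farity L f)) as [h|h].
    - rewrite (proof_irrelevance _ h (proj2_sig (Fin.to_nat x))). rewrite Fin.of_nat_to_nat_inv; auto.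
    - exfalso; apply h; apply (proj2_sig (Fin.to_nat x)). }
  destruct (wit phi 0 sigma) as [j Hj].
  - apply ev_true; intros k. exists (fint (Ms k) f (fun x => e k (g x))). unfold phi; cbn [sat eval].
    unfold upd at 1; rewrite Nat.eqb_refl. f_equal. apply functional_extensionality; intros x.
    unfold upd; simpl. symmetry; apply Hs.
  - exists j. revert Hj; apply ev_mono; intros k Hk. unfold phi in Hk; cbn [sat eval] in Hk.
    assert (E1 : es (updn sigma 0 j) k 0 = e k j) by (unfold es, updn; reflexivity).
    rewrite E1 in Hk. rewrite Hk. f_equal.
    apply functional_extensionality; intros x. rewrite <- (Hs k x). unfold es, updn; reflexivity.
Qed.

Definition LM : Structure L :=
  {| dom := D;
     dom_inhabited := inhabits (cls 0);
     fint := fun f args => cls (W f (fun x => rep (args x)));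
     rint := fun r args => ev (fun k => rint (Ms k) r (fun x => e k (rep (args x)))) |}.

Lemma term_truth t : forall sigma, exists j, eval LM (fun m => cls (sigma m)) t = cls j /\
  ev (fun k => e k j = eval (Ms k) (es sigma k) t).
Proof.
  induction t as [n|f args IH]; intros sigma.
  - exists (sigma n); split; auto. apply ev_true; intros; reflexivity.
  - set (J := fun x => proj1_sig (constructive_indefinite_description _ (IH x sigma))).
    assert (HJ : forall x, eval LM (fun m => cls (sigma m)) (args x) = cls (J x) /\
                 ev (fun k => e k (J x) = eval (Ms k) (es sigma k) (args x))).
    { intros x; unfold J; apply (proj2_sig (constructive_indefinite_description _ (IH x sigma))). }
    exists (W f (fun x => rep (cls (J x)))). split.
    + simpl. f_equal. f_equal. apply functional_extensionality; intros x. rewrite (proj1 (HJ x)); auto.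
    + pose proof (W_spec f (fun x => rep (cls (J x)))) as H1.
      pose proof (ev_fin (fun x k => e k (rep (cls (J x))) = e k (J x)) (fun x => rep_cls (J x))) as H2.
      pose proof (ev_fin (fun x k => e k (J x) = eval (Ms k) (es sigma k) (args x)) (fun x => proj2 (HJ x))) as H3.
      pose proof (ev_and H1 (ev_and H2 H3)) as H4. revert H4; apply ev_mono; intros k [A [B C]].
      rewrite A. simpl. f_equal. apply functional_extensionality; intros x. rewrite B; auto.
Qed.

Lemma upd_cls sigma n j : forall m, upd LM (fun m => cls (sigma m)) n (cls j) m = cls (updn sigma n j m).
Proof. intros m; unfold upd, updn; destruct (Nat.eqb m n); auto. Qed.

Lemma upd_es sigma n j k : forall m, es (updn sigma n j) k m = upd (Ms k) (es sigma k) n (e k j) m.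
Proof. intros m; unfold es, upd, updn; destruct (Nat.eqb m n); auto. Qed.

Lemma ev_false : ~ ev (fun _ => False).
Proof. intros [K HK]; apply (HK K); auto. Qed.

Lemma truth phi : forall sigma, sat LM (fun m => cls (sigma m)) phi <-> ev (fun k => sat (Ms k) (es sigma k) phi).
Proof.
  induction phi; intros sigma.
  - simpl; split; [tauto|intros H; apply ev_false; auto].
  - destruct (term_truth t sigma) as [j1 [E1 H1]]. destruct (term_truth t0 sigma) as [j2 [E2 H2]].
    simpl. rewrite E1, E2, cls_eq. unfold Rk. split; intros H.
    + pose proof (ev_and H (ev_and H1 H2)) as H3; revert H3; apply ev_mono; intros k [A [B C]]; congruence.
    + pose proof (ev_and H (ev_and H1 H2)) as H3; revert H3; apply ev_mono; intros k [A [B C]]; congruence.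
  - set (J := fun x => proj1_sig (constructive_indefinite_description _ (term_truth (t x) sigma))).
    assert (HJ : forall x, eval LM (fun m => cls (sigma m)) (t x) = cls (J x) /\
                 ev (fun k => e k (J x) = eval (Ms k) (es sigma k) (t x))).
    { intros x; unfold J; apply (proj2_sig (constructive_indefinite_description _ (term_truth (t x) sigma))). }
    simpl.
    assert (E : (fun x => rep (eval LM (fun m => cls (sigma m)) (t x))) = (fun x => rep (cls (J x)))).
    { apply functional_extensionality; intros x; rewrite (proj1 (HJ x)); auto. }
    change (ev (fun k => rint (Ms k) r (fun x => e k ((fun x => rep (eval LM (fun m => cls (sigma m)) (t x))) x))) <->
            ev (fun k => rint (Ms k) r (fun i => eval (Ms k) (es sigma k) (t i)))).
    rewrite E.
    pose proof (ev_fin (fun x k => e k (rep (cls (J x))) = e k (J x)) (fun x => rep_cls (J x))) as H2.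
    pose proof (ev_fin (fun x k => e k (J x) = eval (Ms k) (es sigma k) (t x)) (fun x => proj2 (HJ x))) as H3.
    pose proof (ev_and H2 H3) as H4.
    assert (H5 : ev (fun k => (fun x => e k (rep (cls (J x)))) = (fun i => eval (Ms k) (es sigma k) (t i)))).
    { revert H4; apply ev_mono; intros k [A B]; apply functional_extensionality; intros x; rewrite A; auto. }
    split; intros H; pose proof (ev_and H H5) as H6; revert H6; apply ev_mono; intros k [A B];
      [rewrite <- B| rewrite B]; auto.
  - simpl. rewrite IHphi. split.
    + intros H. destruct (conv_s sigma phi) as [H1|H1]; [tauto|auto].
    + intros H H1. apply (ev_not H); auto.
  - simpl. rewrite IHphi1, IHphi2. split.
    + intros [H1 H2]; apply ev_and; auto.
    + intros H; split; revert H; apply ev_mono; tauto.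
  - simpl. rewrite IHphi1, IHphi2. split.
    + intros [H|H]; revert H; apply ev_mono; tauto.
    + intros H. destruct (conv_s sigma phi1) as [H1|H1]; [left; auto|].
      destruct (conv_s sigma phi2) as [H2|H2]; [right; auto|].
      exfalso. pose proof (ev_and H (ev_and H1 H2)) as H3. apply ev_false; revert H3; apply ev_mono; tauto.
  - simpl. rewrite IHphi1, IHphi2. split.
    + intros H. destruct (conv_s sigma phi1) as [H1|H1].
      * specialize (H H1). revert H; apply ev_mono; tauto.
      * revert H1; apply ev_mono; tauto.
    + intros H H1. pose proof (ev_and H H1) as H2; revert H2; apply ev_mono; tauto.
  - simpl. split.
    + intros [C HC]. rewrite <- (cls_rep C) in HC.
      rewrite (sat_ext _ _ _ _ (upd_cls sigma n (rep C))) in HC. rewrite IHphi in HC.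
      revert HC; apply ev_mono; intros k Hk. exists (e k (rep C)).
      rewrite <- (sat_ext _ _ _ _ (upd_es sigma n (rep C) k)); auto.
    + intros H. destruct (wit phi n sigma H) as [j Hj]. exists (cls j).
      rewrite (sat_ext _ _ _ _ (upd_cls sigma n j)). rewrite IHphi; auto.
  - simpl. split.
    + intros H. destruct (conv_s sigma (fAll n phi)) as [H1|H1]; [exact H1|].
      exfalso.
      assert (H2 : ev (fun k => exists c, sat (Ms k) (upd (Ms k) (es sigma k) n c) (fNot phi))).
      { revert H1; apply ev_mono; intros k Hk. simpl in Hk. apply not_all_ex_not in Hk. exact Hk. }
      destruct (wit (fNot phi) n sigma H2) as [j Hj].
      specialize (H (cls j)). rewrite (sat_ext _ _ _ _ (upd_cls sigma n j)) in H. rewrite IHphi in H.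
      apply ev_false. pose proof (ev_and H Hj) as H3; revert H3; apply ev_mono; simpl; tauto.
    + intros H C. rewrite <- (cls_rep C). rewrite (sat_ext _ _ _ _ (upd_cls sigma n (rep C))). rewrite IHphi.
      revert H; apply ev_mono; intros k Hk.
      rewrite (sat_ext _ _ _ _ (upd_es sigma n (rep C) k)); auto.
Qed.

Lemma LL : exists M, is_model T M /\ exists e0 : nat -> dom M,
  forall phi, sat M e0 phi <-> ev (fun k => sat (Ms k) (e k) phi).
Proof.
  exists LM. split.
  - intros phi Hphi env.
    assert (E : forall m, env m = cls (rep (env m))) by (intros; rewrite cls_rep; auto).
    rewrite (sat_ext _ _ _ _ E). apply (truth phi (fun m => rep (env m))).
    apply ev_true; intros k; apply (HM k); auto.
  - exists cls. intros phi. apply (truth phi (fun m => m)).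
Qed.

End Limit.


Unset Implicit Arguments.
Open Scope nat_scope.

Lemma hp_pos n : (0 < (/2)^n)%R.
Proof. apply pow_lt; lra. Qed.

Lemma hp_lt m N : N < m -> ((/2)^m < (/2)^N)%R.
Proof.
  intros H. rewrite !pow_inv. apply Rinv_lt_contravar.
  - apply Rmult_lt_0_compat; apply pow_lt; lra.
  - apply Rlt_pow; auto; lra.
Qed.

Lemma hp_le m N : N <= m -> ((/2)^m <= (/2)^N)%R.
Proof. intros H. destruct (Nat.eq_dec m N); [subst; lra|]. left; apply hp_lt; lia. Qed.

Lemma hp_small eps : (0 < eps)%R -> exists N, ((/2)^N < eps)%R.
Proof.
  intros H. destruct (pow_lt_1_zero (/2) ltac:(rewrite Rabs_right; lra) eps H) as [N HN].
  exists N. specialize (HN N (le_n _)). rewrite Rabs_right in HN; auto. left; apply hp_pos.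
Qed.

Section Metric.
Variable L : Language.
Variable Phi : seq_formulas L.
Hypothesis HPhi : rich Phi.
Variable T : theory L.
Variable E : nat -> formula L.
Hypothesis HE : forall p, exists n, E n = p.

Notation G := (Gset T Phi).

Lemma G_tp p : G p -> exists M a b, p = tp2 M a b /\ same_entries M a b.
Proof. intros [M [_ [a [b [_ [_ [Hs Ep]]]]]]]; exists M, a, b; auto. Qed.

Definition chiA (i j : nat) : formula L :=
  fAnd (eqf L (2 * i) (2 * j + 1)) (bigand j (fun j' => fNot (eqf L (2 * i) (2 * j' + 1)))).
Definition chiB (i j : nat) : formula L :=
  fAnd (eqf L (2 * j) (2 * i + 1)) (bigand j (fun j' => fNot (eqf L (2 * j') (2 * i + 1)))).

Lemma alpha_G p i : G p -> p (eqf L (2 * i) (2 * alpha L p i + 1)).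
Proof.
  intros Hp. apply Gset_iff in Hp. destruct Hp as [_ [_ [_ [H1 _]]]].
  unfold alpha. apply (least_spec (fun j => p (eqf L (2 * i) (2 * j + 1)))). apply H1.
Qed.
Lemma beta_G p j : G p -> p (eqf L (2 * beta L p j) (2 * j + 1)).
Proof.
  intros Hp. apply Gset_iff in Hp. destruct Hp as [_ [_ [_ [_ H2]]]].
  unfold beta. apply (least_spec (fun i => p (eqf L (2 * i) (2 * j + 1)))). apply H2.
Qed.

Lemma chiA_iff p i j : G p -> (p (chiA i j) <-> alpha L p i = j).
Proof.
  intros Hp. pose proof (alpha_G p i Hp) as Ha.
  destruct (G_tp p Hp) as [M [a [b [Ep _]]]]. subst p.
  unfold chiA. change (sat M (pair_env M a b) (fAnd (eqf L (2 * i) (2 * j + 1)) (bigand j (fun j' => fNot (eqf L (2 * i) (2 * j' + 1)))))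
    <-> alpha L (tp2 M a b) i = j).
  simpl. rewrite sat_bigand. split.
  - intros [H1 H2]. unfold alpha. apply least_unique; auto.
    all: try (intros j' Hj' H3; apply (H2 j' Hj'); exact H3).
  - intros H. subst j. split; auto.
    intros j' Hj' H3. unfold alpha in Hj'.
    apply (proj2 (least_spec (fun j => tp2 M a b (eqf L (2 * i) (2 * j + 1))) (ex_intro (fun j => tp2 M a b (eqf L (2 * i) (2 * j + 1))) _ Ha)) j' Hj'). exact H3.
Qed.

Lemma chiB_iff p i j : G p -> (p (chiB i j) <-> beta L p i = j).
Proof.
  intros Hp. pose proof (beta_G p i Hp) as Ha.
  destruct (G_tp p Hp) as [M [a [b [Ep _]]]]. subst p.
  unfold chiB. change (sat M (pair_env M a b) (fAnd (eqf L (2 * j) (2 * i + 1)) (bigand j (fun j' => fNot (eqf L (2 * j') (2 * i + 1)))))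
    <-> beta L (tp2 M a b) i = j).
  simpl. rewrite sat_bigand. split.
  - intros [H1 H2]. unfold beta. apply least_unique; auto.
    all: try (intros j' Hj' H3; apply (H2 j' Hj'); exact H3).
  - intros H. subst j. split; auto.
    intros j' Hj' H3. unfold beta in Hj'.
    apply (proj2 (least_spec (fun j => tp2 M a b (eqf L (2 * j) (2 * i + 1))) (ex_intro (fun j => tp2 M a b (eqf L (2 * j) (2 * i + 1))) _ Ha)) j' Hj'). exact H3.
Qed.

Definition differ (p q : ptype L) (i : nat) : Prop :=
  ~ (p (E i) <-> q (E i)) \/ alpha L p i <> alpha L q i \/ beta L p i <> beta L q i.

Definition agree (p q : ptype L) (N : nat) : Prop := forall i, i < N -> ~ differ p q i.

Definition lit (p : ptype L) (phi : formula L) : formula L :=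
  if excluded_middle_informative (p phi) then phi else fNot phi.

Definition bf (p : ptype L) (N : nat) : formula L :=
  bigand N (fun i => fAnd (lit p (E i)) (fAnd (chiA i (alpha L p i)) (chiB i (beta L p i)))).

Lemma lit_iff p q phi : G q -> (q (lit p phi) <-> (q phi <-> p phi)).
Proof.
  intros Hq. destruct (G_tp q Hq) as [M [a [b [Eq _]]]]. subst q.
  unfold lit. destruct excluded_middle_informative as [h|h].
  - tauto.
  - change (~ tp2 M a b phi <-> (tp2 M a b phi <-> p phi)). tauto.
Qed.

Lemma bf_iff p q N : G p -> G q -> (q (bf p N) <-> agree p q N).
Proof.
  intros Hp Hq. pose proof (lit_iff p q) as HL.
  destruct (G_tp q Hq) as [M [a [b [Eq _]]]].
  unfold bf, agree. rewrite Eq. unfold tp2 at 1. rewrite sat_bigand.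
  split.
  - intros H i Hi. specialize (H i Hi). cbn [sat] in H. destruct H as [H1 [H2 H3]].
    assert (H1' : q (lit p (E i))) by (rewrite Eq; exact H1).
    assert (H2' : q (chiA i (alpha L p i))) by (rewrite Eq; exact H2).
    assert (H3' : q (chiB i (beta L p i))) by (rewrite Eq; exact H3).
    apply HL in H1'; auto. apply chiA_iff in H2'; auto. apply chiB_iff in H3'; auto.
    rewrite <- Eq. unfold differ. intros [A|[A|A]]; [tauto|apply A; symmetry; exact H2'|apply A; symmetry; exact H3'].
  - intros H i Hi. rewrite <- Eq in H. specialize (H i Hi). unfold differ in H.
    cbn [sat]. split; [|split].
    + change (tp2 M a b (lit p (E i))). rewrite <- Eq. apply HL; auto. tauto.
    + change (tp2 M a b (chiA i (alpha L p i))). rewrite <- Eq. apply chiA_iff; auto. apply NNPP; intros C; apply H; right; left; auto.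
    + change (tp2 M a b (chiB i (beta L p i))). rewrite <- Eq. apply chiB_iff; auto. apply NNPP; intros C; apply H; right; right; auto.
Qed.

Lemma agree_refl p N : agree p p N.
Proof. intros i _ [H|[H|H]]; tauto. Qed.
Lemma agree_sym p q N : agree p q N -> agree q p N.
Proof. intros H i Hi C; apply (H i Hi); destruct C as [C|[C|C]]; [left; tauto|right; left; auto|right; right; auto]. Qed.
Lemma agree_trans p q r N : agree p q N -> agree q r N -> agree p r N.
Proof.
  intros H1 H2 i Hi C. specialize (H1 i Hi); specialize (H2 i Hi). unfold differ in *.
  apply H1. destruct C as [C|[C|C]].
  - destruct (classic (p (E i) <-> q (E i))) as [D|D]; [|left; auto]. exfalso; apply H2; left; tauto.
  - destruct (Nat.eq_dec (alpha L p i) (alpha L q i)) as [D|D]; [|right; left; auto].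
    exfalso; apply H2; right; left; congruence.
  - destruct (Nat.eq_dec (beta L p i) (beta L q i)) as [D|D]; [|right; right; auto].
    exfalso; apply H2; right; right; congruence.
Qed.
Lemma agree_mono p q N N' : N' <= N -> agree p q N -> agree p q N'.
Proof. intros H1 H2 i Hi; apply H2; lia. Qed.

Lemma bf_self p N : G p -> p (bf p N).
Proof. intros Hp; apply bf_iff; auto; apply agree_refl. Qed.

Definition dist (p q : ptype L) : R :=
  match excluded_middle_informative (exists i, differ p q i) with
  | left _ => ((/2)^(least (differ p q)))%R
  | right _ => 0%R
  end.

Lemma dist_ball p q N : (dist p q < (/2)^N)%R <-> agree p q (S N).
Proof.
  unfold dist. destruct excluded_middle_informative as [h|h].
  - destruct (least_spec _ h) as [H1 H2]. split.
    + intros H i Hi C. assert (least (differ p q) <= i) by (apply least_le; auto).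
      pose proof (hp_le N (least (differ p q)) ltac:(lia)). lra.
    + intros H. destruct (le_lt_dec (least (differ p q)) N) as [l|l].
      * exfalso; apply (H (least (differ p q))); auto; lia.
      * apply hp_lt; auto.
  - split; intros _; [intros i _ C; apply h; exists i; auto| apply hp_pos].
Qed.

Lemma dist_nonneg p q : (0 <= dist p q)%R.
Proof. unfold dist; destruct excluded_middle_informative; [left; apply hp_pos|lra]. Qed.

Lemma differ_sym p q : differ p q = differ q p.
Proof.
  apply functional_extensionality; intros i; apply propositional_extensionality; unfold differ.
  split; intros [C|[C|C]]; [left; tauto|right; left; auto|right; right; auto|left; tauto|right; left; auto|right; right; auto].
Qed.

Lemma dist_sym p q : dist p q = dist q p.
Proof. unfold dist. rewrite (differ_sym p q). reflexivity. Qed.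

Lemma no_differ_eq p q : G p -> G q -> (forall i, ~ differ p q i) -> p = q.
Proof.
  intros Hp Hq H. apply functional_extensionality; intros phi; apply propositional_extensionality.
  destruct (HE phi) as [n Hn]; subst phi. apply NNPP; intros C; apply (H n); left; auto.
Qed.

Lemma dist_zero p q : G p -> G q -> (dist p q = 0%R <-> p = q).
Proof.
  intros Hp Hq. unfold dist. destruct excluded_middle_informative as [h|h].
  - split; intros H.
    + exfalso; pose proof (hp_pos (least (differ p q))); lra.
    + subst q. exfalso. destruct h as [i [C|[C|C]]]; tauto.
  - split; auto. intros _. apply no_differ_eq; auto. intros i C; apply h; exists i; auto.
Qed.

Lemma dist_tri p q r : (dist p r <= dist p q + dist q r)%R.
Proof.
  pose proof (dist_nonneg p q). pose proof (dist_nonneg q r).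
  unfold dist at 1. destruct excluded_middle_informative as [h|h]; [|lra].
  destruct (least_spec _ h) as [H1 H2]. set (n := least (differ p r)) in *.
  assert (A : ~ agree p q (S n) \/ ~ agree q r (S n)).
  { apply NNPP; intros C.
    assert (Ag : agree p r (S n)) by (apply (agree_trans p q r (S n)); apply NNPP; intros D; apply C; [left|right]; auto).
    apply (Ag n); auto. }
  destruct A as [A|A].
  - rewrite <- dist_ball in A. apply Rnot_lt_le in A. lra.
  - rewrite <- dist_ball in A. apply Rnot_lt_le in A. lra.
Qed.

Lemma opn_G (V : ptype L -> Prop) :
  opn (Gspace T Phi) V <-> (forall p, G p -> V p -> exists phi, p phi /\ forall q, G q -> q phi -> V q).
Proof. reflexivity. Qed.

Lemma topo_equiv (V : ptype L -> Prop) :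
  opn (Gspace T Phi) V <-> (forall x, G x -> V x -> exists eps, (0 < eps)%R /\ forall y, G y -> (dist x y < eps)%R -> V y).
Proof.
  rewrite opn_G. split.
  - intros H x Hx Vx. destruct (H x Hx Vx) as [phi [H1 H2]]. destruct (HE phi) as [n Hn]; subst phi.
    exists ((/2)^n)%R; split; [apply hp_pos|]. intros y Hy Hd. apply H2; auto.
    apply dist_ball in Hd. specialize (Hd n ltac:(lia)). apply NNPP; intros C; apply Hd; left; tauto.
  - intros H p Hp Vp. destruct (H p Hp Vp) as [eps [He H2]]. destruct (hp_small eps He) as [N HN].
    exists (bf p (S N)); split; [apply bf_self; auto|]. intros q Hq Hq2. apply H2; auto.
    apply bf_iff in Hq2; auto. apply dist_ball in Hq2. change (dist p q < (/2)^N)%R in Hq2. lra.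
Qed.

Lemma G_choose (u : nat -> ptype L) : (forall k, G (u k)) ->
  exists (Ms : nat -> Structure L) (a b : forall k, nat -> dom (Ms k)),
    forall k, is_model T (Ms k) /\ realises_D Phi (Ms k) (a k) /\ realises_D Phi (Ms k) (b k) /\
      same_entries (Ms k) (a k) (b k) /\ u k = tp2 (Ms k) (a k) (b k).
Proof.
  intros H.
  set (pick := fun k => constructive_indefinite_description _ (H k)).
  set (Ms := fun k => proj1_sig (pick k)).
  set (pa := fun k => constructive_indefinite_description _ (proj2 (proj2_sig (pick k)))).
  set (a := fun k => proj1_sig (pa k)).
  set (pb := fun k => constructive_indefinite_description _ (proj2_sig (pa k))).
  set (b := fun k => proj1_sig (pb k)).
  exists Ms, a, b. intros k. split; [apply (proj1 (proj2_sig (pick k)))|].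
  apply (proj2_sig (pb k)).
Qed.

Hypothesis HG0 : exists p0, G p0.

Lemma G_complete (u : nat -> ptype L) : (forall n, G (u n)) ->
  (forall eps, (0 < eps)%R -> exists N, forall m n, N <= m -> N <= n -> (dist (u m) (u n) < eps)%R) ->
  exists l, G l /\ forall eps, (0 < eps)%R -> exists N, forall n, N <= n -> (dist (u n) l < eps)%R.
Proof.
  intros Hu Hc.
  assert (Hc2 : forall N, exists K, forall m n, K <= m -> K <= n -> agree (u m) (u n) (S N)).
  { intros N. destruct (Hc ((/2)^N)%R (hp_pos N)) as [K HK]. exists K; intros m n Hm Hn; apply dist_ball; auto. }
  destruct (G_choose u Hu) as [Ms [a [b Hab]]].
  set (e := fun k => pair_env (Ms k) (a k) (b k)).
  assert (Hue : forall k phi, u k phi <-> sat (Ms k) (e k) phi).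
  { intros k phi. destruct (Hab k) as [_ [_ [_ [_ Ek]]]]. rewrite Ek; reflexivity. }
  assert (Hstab : forall i, exists K, forall m n, K <= m -> K <= n -> ~ differ (u m) (u n) i).
  { intros i. destruct (Hc2 i) as [K HK]. exists K; intros m n Hm Hn; apply (HK m n Hm Hn); lia. }
  destruct (LL L Phi HPhi T Ms a e) as [LMd [HLM [e0 He0]]].
  - intros k; apply Hab.
  - intros k; apply Hab.
  - intros m. destruct (parity m) as [[_ Hm]|[_ Hm]].
    + exists (Nat.div2 m). apply ev_true; intros k. unfold e. rewrite Hm at 1. rewrite pe_even; auto.
    + destruct (Hstab (Nat.div2 m)) as [K HK]. exists (beta L (u K) (Nat.div2 m)).
      exists K; intros k Hk. assert (Eb : beta L (u k) (Nat.div2 m) = beta L (u K) (Nat.div2 m)).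
      { apply NNPP; intros C; apply (HK k K Hk (le_n _)); right; right; auto. }
      rewrite <- Eb. pose proof (beta_G (u k) (Nat.div2 m) (Hu k)) as B. rewrite Hue in B.
      unfold e. rewrite Hm at 1. unfold eqf in B; cbn [sat eval] in B. unfold e in B. rewrite pe_even, pe_odd in B. rewrite pe_odd; auto.
  - intros k i; unfold e; apply pe_even.
  - intros phi. destruct (HE phi) as [n Hn]; subst phi. destruct (Hstab n) as [K HK].
    destruct (classic (u K (E n))) as [h|h]; [left|right]; exists K; intros k Hk; rewrite <- Hue;
      specialize (HK k K Hk (le_n _)); unfold differ in HK; apply NNPP; intros C; apply HK; left; tauto.
  - set (q := fun phi => ev (fun k => u k phi)).
    assert (Hq : q = tp2 LMd (fun i => e0 (2 * i)) (fun j => e0 (2 * j + 1))).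
    { apply functional_extensionality; intros phi; apply propositional_extensionality.
      unfold q, tp2. rewrite (sat_ext _ phi _ e0).
      - rewrite He0. split; apply ev_mono; intros k; rewrite Hue; auto.
      - intros m. rewrite pe_gen. destruct (parity m) as [[E1 E2]|[E1 E2]]; rewrite E1; rewrite <- E2; auto. }
    assert (HqG : G q).
    { apply Gset_iff. split; [exists LMd; split; auto; exists (fun i => e0 (2 * i)), (fun j => e0 (2 * j + 1)); auto|].
      split; [intros k0; apply ev_true; intros k; destruct (proj1 (Gset_iff L Phi T (u k)) (Hu k)) as [_ [A _]]; apply A|].
      split; [intros k0; apply ev_true; intros k; destruct (proj1 (Gset_iff L Phi T (u k)) (Hu k)) as [_ [_ [A _]]]; apply A|].
      split.
      - intros i. destruct (Hstab i) as [K HK]. exists (alpha L (u K) i). exists K; intros k Hk.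
        assert (Ea : alpha L (u k) i = alpha L (u K) i).
        { apply NNPP; intros C; apply (HK k K Hk (le_n _)); right; left; auto. }
        rewrite <- Ea. apply alpha_G; auto.
      - intros j. destruct (Hstab j) as [K HK]. exists (beta L (u K) j). exists K; intros k Hk.
        assert (Eb : beta L (u k) j = beta L (u K) j).
        { apply NNPP; intros C; apply (HK k K Hk (le_n _)); right; right; auto. }
        rewrite <- Eb. apply beta_G; auto. }
    exists q; split; auto.
    intros eps Heps. destruct (hp_small eps Heps) as [N HN]. destruct (Hc2 N) as [K HK].
    exists K; intros n Hn. apply Rlt_trans with ((/2)^N)%R; auto. apply dist_ball.
    apply (bf_iff (u n) q (S N) (Hu n) HqG).
    exists K; intros k Hk. apply bf_iff; auto.
Qed.

Lemma G_separable : exists u : nat -> ptype L, forall x, G x -> forall eps, (0 < eps)%R ->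
       exists n, G (u n) /\ (dist x (u n) < eps)%R.
Proof.
  destruct HG0 as [p0 Hp0].
  exists (fun n => match excluded_middle_informative (exists p, G p /\ p (E n)) with
                   | left h => proj1_sig (constructive_indefinite_description _ h)
                   | right _ => p0 end).
  intros x Hx eps Heps. destruct (hp_small eps Heps) as [N HN].
  destruct (HE (bf x (S N))) as [n Hn]. exists n.
  destruct excluded_middle_informative as [h|h].
  - destruct (proj2_sig (constructive_indefinite_description _ h)) as [H1 H2].
    split; auto. rewrite Hn in H2. apply bf_iff in H2; auto. apply dist_ball in H2. eapply Rlt_trans; [exact H2|exact HN].
  - exfalso; apply h; exists x; split; auto; rewrite Hn; apply bf_self; auto.
Qed.

Lemma G_polish : polish (Gspace T Phi).
Proof.
  exists dist. split; [intros; apply dist_nonneg|].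
  split; [intros; apply dist_zero; auto|].
  split; [intros; apply dist_sym|].
  split; [intros; apply dist_tri|].
  split; [intros V; apply topo_equiv|].
  split; [apply G_complete|].
  destruct G_separable as [u Hu]. exists u. intros x Hx eps Heps. destruct (Hu x Hx eps Heps) as [n [H1 H2]].
  exists n; auto.
Qed.

End Metric.


Unset Implicit Arguments.
Open Scope nat_scope.

Section Groupoid.
Variable L : Language.
Variable Phi : seq_formulas L.
Hypothesis HPhi : rich Phi.
Variable T : theory L.
Variable E : nat -> formula L.
Hypothesis HE : forall p, exists n, E n = p.
Hypothesis HG0 : exists p0, Gset T Phi p0.

Notation G := (Gset T Phi).
Notation B := (Bset T Phi).
Notation agr := (agree L E).

Lemma B_G p : B p -> G p.
Proof.
  intros [M [HM [a [Ha Ep]]]]; subst p. apply G_intro; auto. split; intros i; exists i; auto.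
Qed.

Lemma s_B p : G p -> B (smap L p).
Proof. intros [M [HM [a [b [Ha [Hb [Hs Ep]]]]]]]; subst p. rewrite s_tp. exists M; split; [auto| exists b; auto]. Qed.
Lemma t_B p : G p -> B (tmap L p).
Proof. intros [M [HM [a [b [Ha [Hb [Hs Ep]]]]]]]; subst p. rewrite t_tp. exists M; split; [auto| exists a; auto]. Qed.

Lemma cont_rn (rho : nat -> nat) (S1 S2 : ptype L -> Prop) :
  (forall x, S1 x -> S2 (fun phi => x (rn rho phi))) ->
  continuous_sp (logic_space S1) (logic_space S2) (fun x => fun phi => x (rn rho phi)).
Proof.
  intros H. split; [intros x Hx; apply H; auto|].
  intros V HV x Hx Vx. simpl in HV. destruct (HV _ (H x Hx) Vx) as [phi [H1 H2]].
  exists (rn rho phi); split; [exact H1|]. intros q Hq Hq2. apply H2; auto.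
Qed.

Lemma s_cont : continuous_sp (Gspace T Phi) (Bspace T Phi) (smap L).
Proof. apply (cont_rn (rs)); apply s_B. Qed.
Lemma t_cont : continuous_sp (Gspace T Phi) (Bspace T Phi) (tmap L).
Proof. apply (cont_rn (rt)); apply t_B. Qed.
Lemma i_cont : continuous_sp (Gspace T Phi) (Gspace T Phi) (imap L).
Proof. apply (cont_rn (ri)); intros; apply G_inv; auto. Qed.

Lemma rho_alpha_lemma x (M : Structure L) (c : nat -> dom M) psi :
  tp2 M c c (rn (fun m => if Nat.even m then 2 * alpha L x (Nat.div2 m) else m) psi) <->
  tp2 M (fun i => c (alpha L x i)) c psi.
Proof.
  rewrite tp_rn. unfold tp2; apply sat_ext; intros m. cbv beta. rewrite (pe_gen L M _ c m).
  destruct (parity m) as [[E1 E2]|[E1 E2]]; rewrite E1.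
  - rewrite pe_even; auto.
  - rewrite E2 at 1. rewrite pe_odd; auto.
Qed.

Lemma s_open : open_map (Gspace T Phi) (Bspace T Phi) (smap L).
Proof.
  intros U HU y Hy [x [Hx [Ux Ey]]]. simpl in HU.
  destruct (HU x Hx Ux) as [phi [Hphi HUphi]].
  destruct Hx as [M [HM [a [b [Ha [Hb [Hs Ex]]]]]]].
  set (n := fb phi).
  set (rho := fun m => if Nat.even m then 2 * alpha L x (Nat.div2 m) else m).
  assert (Ea : (fun i => b (alpha L x i)) = a).
  { apply functional_extensionality; intros i. rewrite Ex. symmetry. apply alpha_tp. apply Hs. }
  exists (fAnd (rn rho phi) (bigand n (fun k => rn rho (Dxf L Phi k)))). split.
  - subst y. assert (Hsx : smap L x = tp2 M b b) by (rewrite Ex, s_tp; auto). rewrite Hsx. split.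
    + change (tp2 M b b (rn rho phi)). unfold rho. rewrite rho_alpha_lemma. rewrite Ea. rewrite <- Ex. exact Hphi.
    + apply sat_bigand. intros k _. change (tp2 M b b (rn rho (Dxf L Phi k))).
      unfold rho. rewrite rho_alpha_lemma. rewrite Ea. apply Dxk_tp. exact (Ha k).
  - intros y' Hy' Hth. destruct Hy' as [M' [HM' [c [Hc Ey']]]]. subst y'. destruct Hth as [H1 H2].
    change (tp2 M' c c (rn rho phi)) in H1. unfold rho in H1. rewrite rho_alpha_lemma in H1.
    assert (HD : forall k, k < n -> Dk L Phi M' (fun i => c (alpha L x i)) k).
    { intros k Hk. apply sat_bigand with (i := k) in H2; auto.
      change (tp2 M' c c (rn rho (Dxf L Phi k))) in H2. unfold rho in H2. rewrite rho_alpha_lemma in H2.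
      apply Dxk_tp in H2; auto. }
    destruct (Ext2 L Phi HPhi M' c (fun i => c (alpha L x i)) n Hc) as [a' [Hpre [Ha' Hse']]].
    + intros i _; exists (alpha L x i); auto.
    + intros k Hk c0 Hc0; apply (HD k Hk c0 Hc0).
    + exists (tp2 M' a' c). split; [apply G_intro; auto|]. split; [|rewrite s_tp; auto].
      apply HUphi; [apply G_intro; auto|].
      unfold tp2. revert H1. unfold tp2. apply sat_coinc. intros m Hm. rewrite !pe_gen.
      destruct (Nat.even m); auto. apply Hpre. apply occurs_free_lt in Hm.
      assert (Nat.div2 m <= m) by (apply Nat.div2_le_upper_bound; lia). unfold n; lia.
Qed.

Definition Cz (z : ptype L * ptype L) : Prop := G (fst z) /\ G (snd z) /\ smap L (fst z) = tmap L (snd z).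
Definition agree2 (z w : ptype L * ptype L) (N : nat) : Prop := agr (fst z) (fst w) N /\ agr (snd z) (snd w) N.
Definition G2 (z : ptype L * ptype L) : Prop := G (fst z) /\ G (snd z).

Lemma agree2_refl z N : agree2 z z N.
Proof. split; apply agree_refl. Qed.
Lemma agree2_sym z w N : agree2 z w N -> agree2 w z N.
Proof. intros [A B0]; split; apply agree_sym; auto. Qed.
Lemma agree2_trans z w v N : agree2 z w N -> agree2 w v N -> agree2 z v N.
Proof. intros [A1 B1] [A2 B2]; split; eapply agree_trans; eauto. Qed.
Lemma agree2_mono z w N N' : N' <= N -> agree2 z w N -> agree2 z w N'.
Proof. intros H [A1 B1]; split; eapply agree_mono; eauto. Qed.

Lemma Cne : exists z, Cz z.
Proof.
  destruct HG0 as [p0 Hp0]. pose proof (t_B p0 Hp0) as Hb. exists (tmap L p0, tmap L p0).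
  split; [apply B_G; auto|]. split; [apply B_G; auto|].
  destruct Hb as [M [HM [a [Ha Eb]]]]. simpl. rewrite Eb, s_tp, t_tp; auto.
Qed.

Lemma agree_E p q n N : n < N -> agr p q N -> (p (E n) <-> q (E n)).
Proof. intros H1 H2. apply NNPP; intros C. apply (H2 n H1). left; auto. Qed.

Lemma C_closed z : G2 z -> ~ Cz z -> exists N, forall w, G2 w -> agree2 z w N -> ~ Cz w.
Proof.
  intros [Hz1 Hz2] Hc.
  assert (Hne : smap L (fst z) <> tmap L (snd z)) by (intros E0; apply Hc; repeat split; auto).
  assert (Hphi : exists phi, ~ (smap L (fst z) phi <-> tmap L (snd z) phi)).
  { apply NNPP; intros C. apply Hne. apply functional_extensionality; intros phi; apply propositional_extensionality.
    apply NNPP; intros D; apply C; exists phi; auto. }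
  destruct Hphi as [phi Hphi]. destruct (HE (rn rs phi)) as [n1 Hn1]. destruct (HE (rn rt phi)) as [n2 Hn2].
  exists (S (n1 + n2)). intros w [Hw1 Hw2] [A1 A2] [_ [_ Ew]].
  apply Hphi. assert (Ew' : smap L (fst w) phi <-> tmap L (snd w) phi) by (rewrite Ew; tauto).
  unfold smap, tmap in Ew' |- *. rewrite <- Hn1, <- Hn2 in *.
  rewrite (agree_E _ _ n1 (S (n1 + n2)) ltac:(lia) A1), (agree_E _ _ n2 (S (n1 + n2)) ltac:(lia) A2).
  exact Ew'.
Qed.

Definition exz (z : ptype L * ptype L) (N : nat) : Prop := exists w, Cz w /\ agree2 z w N.
Definition lvl (z : ptype L * ptype L) : nat := least (fun N => ~ exz z (S N)).
Definition rtr (z : ptype L * ptype L) : ptype L * ptype L :=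
  match excluded_middle_informative (Cz z) with
  | left _ => z
  | right _ => epsilon (inhabits z) (fun w => Cz w /\ agree2 z w (lvl z))
  end.

Lemma exz_mono z N N' : N' <= N -> exz z N -> exz z N'.
Proof. intros H [w [H1 H2]]; exists w; split; auto; eapply agree2_mono; eauto. Qed.

Lemma lvl_spec z : G2 z -> ~ Cz z ->
  exz z (lvl z) /\ ~ exz z (S (lvl z)) /\ forall N, exz z N -> N <= lvl z.
Proof.
  intros HG Hc. destruct (C_closed z HG Hc) as [N HN].
  assert (Hex : exists N, ~ exz z (S N)).
  { exists N. intros [w [H1 H2]]. apply (HN w); auto; [split; apply H1|eapply agree2_mono; [|exact H2]; lia]. }
  destruct (least_spec _ Hex) as [H1 H2]. fold (lvl z) in H1, H2.
  assert (H3 : forall N, exz z N -> N <= lvl z).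
  { intros N' HN'. destruct (le_lt_dec N' (lvl z)); auto. exfalso; apply H1. eapply exz_mono; [|exact HN']; lia. }
  split; [|split; auto].
  destruct (lvl z) eqn:El.
  - destruct Cne as [w Hw]. exists w; split; auto; split; intros i Hi; lia.
  - apply NNPP; intros C. apply (H2 n); [lia|auto].
Qed.

Lemma rtr_C z : G2 z -> Cz (rtr z) /\ agree2 z (rtr z) (lvl z).
Proof.
  intros HG. unfold rtr. destruct excluded_middle_informative as [h|h].
  - split; auto. apply agree2_refl.
  - apply (epsilon_spec (inhabits z) (fun w => Cz w /\ agree2 z w (lvl z))).
    apply (lvl_spec z HG h).
Qed.

Lemma rtr_id z : Cz z -> rtr z = z.
Proof. intros H; unfold rtr; destruct excluded_middle_informative; tauto. Qed.

Lemma rtr_cont z : G2 z -> forall N, exists N', forall w, G2 w -> agree2 z w N' -> agree2 (rtr z) (rtr w) N.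
Proof.
  intros Hz N. destruct (classic (Cz z)) as [Cz0|Cz0].
  - exists N. intros w Hw Ag. rewrite (rtr_id z Cz0). destruct (classic (Cz w)) as [Cw|Cw].
    + rewrite (rtr_id w Cw); auto.
    + destruct (lvl_spec w Hw Cw) as [_ [_ H3]].
      assert (HN : N <= lvl w) by (apply H3; exists z; split; auto; apply agree2_sym; auto).
      destruct (rtr_C w Hw) as [_ A]. eapply agree2_trans; [exact Ag|]. eapply agree2_mono; [exact HN|exact A].
  - destruct (lvl_spec z Hz Cz0) as [H1 [H2 H3]]. set (L0 := lvl z) in *.
    exists (S L0). intros w Hw Ag.
    assert (Cw : ~ Cz w) by (intros Cw; apply H2; exists w; split; auto).
    assert (Hl : lvl w = L0).
    { unfold lvl. apply least_unique.
      - intros [v [Cv Av]]. apply H2. exists v; split; auto. eapply agree2_trans; eauto.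
      - intros j Hj C. apply C. destruct H1 as [v [Cv Av]]. exists v; split; auto.
        apply agree2_trans with z; [apply agree2_sym; eapply agree2_mono; [|exact Ag]; lia|].
        eapply agree2_mono; [|exact Av]; lia. }
    assert (Ew : rtr w = rtr z).
    { unfold rtr. destruct (excluded_middle_informative (Cz w)) as [h|h]; [tauto|].
      destruct (excluded_middle_informative (Cz z)) as [h'|h']; [tauto|].
      rewrite Hl. fold L0.
      assert (EP : (fun v => Cz v /\ agree2 w v L0) = (fun v => Cz v /\ agree2 z v L0)).
      { apply functional_extensionality; intros v; apply propositional_extensionality; split; intros [A B0]; split; auto.
        - apply agree2_trans with w; auto. eapply agree2_mono; [|exact Ag]; lia.
        - apply agree2_trans with z; auto. apply agree2_sym; eapply agree2_mono; [|exact Ag]; lia. }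
      rewrite EP. f_equal. apply proof_irrelevance. }
    rewrite Ew. apply agree2_refl.
Qed.

Lemma mulnat_cont p0 q0 phi : G p0 -> G q0 -> mulnat L p0 q0 phi ->
  exists N, forall p q, G p -> G q -> agr p0 p N -> agr q0 q N -> mulnat L p q phi.
Proof.
  intros Hp0 Hq0 Hm.
  destruct (HE (rn rs (rn (mrho L p0 q0) phi))) as [n0 Hn0].
  exists (S (fb phi + n0)). intros p q Hp Hq Ap Aq.
  assert (Eal : forall i, i < S (fb phi + n0) -> alpha L p i = alpha L p0 i).
  { intros i Hi. apply NNPP; intros C. apply (Ap i Hi). right; left; auto. }
  assert (Ebe : forall i, i < S (fb phi + n0) -> beta L q i = beta L q0 i).
  { intros i Hi. apply NNPP; intros C. apply (Aq i Hi). right; right; auto. }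
  assert (H1 : mulnat L p q phi <-> p (rn rs (rn (mrho L p0 q0) phi))).
  { destruct (G_tp L Phi T p Hp) as [M [a [b [Ep _]]]]. subst p.
    unfold mulnat, smap. rewrite !tp_rn. rewrite !sat_rn. apply sat_coinc. intros m Hm1.
    apply occurs_free_lt in Hm1. unfold mrho.
    assert (Nat.div2 m <= m) by (apply Nat.div2_le_upper_bound; lia).
    destruct (Nat.even m); [rewrite Eal|rewrite Ebe]; auto; lia. }
  apply H1. rewrite <- Hn0. apply (agree_E p0 p n0 (S (fb phi + n0))); [lia|auto|].
  rewrite Hn0. exact Hm.
Qed.

Definition mul (p q : ptype L) : ptype L := mulnat L (fst (rtr (p, q))) (snd (rtr (p, q))).

Lemma se_refl (M : Structure L) a : same_entries M a a.
Proof. split; intros i; exists i; auto. Qed.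

Lemma mulnat_C_props z : Cz z -> G (mulnat L (fst z) (snd z)) /\
  smap L (mulnat L (fst z) (snd z)) = smap L (snd z) /\ tmap L (mulnat L (fst z) (snd z)) = tmap L (fst z).
Proof.
  intros [H1 [H2 H3]].
  destruct (compose_real L Phi T _ _ H1 H2 H3) as [M [HM [a [b [c [Ha [Hb [Hc [Sab [Sbc [Ep Eq]]]]]]]]]]].
  rewrite Ep, Eq. rewrite mulnat_tp.
  - rewrite !s_tp, !t_tp. split; auto. apply G_intro; auto. eapply se_trans; eauto.
  - apply Sab.
  - intros j; destruct (proj2 Sbc j) as [i Hi]; exists i; auto.
Qed.

Lemma mul_spec1 (M : Structure L) a b c : is_model T M -> realises_D Phi M a -> realises_D Phi M b ->
  realises_D Phi M c -> same_entries M a b -> same_entries M b c ->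
  smap L (tp2 M a b) = tp2 M b b /\ tmap L (tp2 M a b) = tp2 M a a /\ imap L (tp2 M a b) = tp2 M b a /\
  mul (tp2 M a b) (tp2 M b c) = tp2 M a c.
Proof.
  intros HM Ha Hb Hc Sab Sbc. rewrite s_tp, t_tp, i_tp. split; auto. split; auto. split; auto.
  unfold mul. rewrite rtr_id.
  - simpl. apply mulnat_tp; [apply Sab|]. intros j; destruct (proj2 Sbc j) as [i Hi]; exists i; auto.
  - split; [apply G_intro; auto|]. split; [apply G_intro; auto|]. simpl. rewrite s_tp, t_tp; auto.
Qed.

Lemma maps_spec : groupoid_maps_spec T Phi (smap L) (tmap L) (imap L) mul.
Proof.
  split.
  - intros M HM a b c Ha Hb Hc Sab Sbc. apply mul_spec1; auto.
  - intros p q Hp Hq E0. apply compose_real; auto.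
Qed.

Lemma axioms : groupoid_axioms (Gset T Phi) (Bset T Phi) (smap L) (tmap L) (imap L) mul.
Proof.
  split; [apply B_G|].
  split; [intros e0 [M [HM [a [Ha Ee]]]]; subst e0; rewrite s_tp, t_tp; auto|].
  split; [intros g Hg; split; [apply s_B; auto|split; [apply t_B; auto|apply G_inv; auto]]|].
  split.
  { intros g h Hg Hh E0.
    destruct (compose_real L Phi T g h Hg Hh E0) as [M [HM [a [b [c [Ha [Hb [Hc [Sab [Sbc [Eg Eh]]]]]]]]]]].
    subst g h. destruct (mul_spec1 M a b c HM Ha Hb Hc Sab Sbc) as [_ [_ [_ Em]]]. rewrite Em.
    rewrite !s_tp, !t_tp. split; auto. apply G_intro; auto. eapply se_trans; eauto. }
  split.
  { intros f g h Hf Hg Hh E1 E2.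
    destruct (compose_real L Phi T f g Hf Hg E1) as [M [HM [a [b [c [Ha [Hb [Hc [Sab [Sbc [Ef Eg]]]]]]]]]]].
    subst f g. rewrite s_tp in E2.
    destruct (glue_t L Phi T h M c Hh Hc (eq_sym E2)) as [d [Eh [Hd Scd]]]. subst h.
    destruct (mul_spec1 M a b c HM Ha Hb Hc Sab Sbc) as [_ [_ [_ E3]]]. rewrite E3.
    destruct (mul_spec1 M a c d HM Ha Hc Hd (se_trans L M a b c Sab Sbc) Scd) as [_ [_ [_ E4]]]. rewrite E4.
    destruct (mul_spec1 M b c d HM Hb Hc Hd Sbc Scd) as [_ [_ [_ E5]]]. rewrite E5.
    destruct (mul_spec1 M a b d HM Ha Hb Hd Sab (se_trans L M b c d Sbc Scd)) as [_ [_ [_ E6]]]. rewrite E6. auto. }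
  split.
  { intros g [M [HM [a [b [Ha [Hb [Sab Eg]]]]]]]. subst g. rewrite s_tp, t_tp.
    destruct (mul_spec1 M a a b HM Ha Ha Hb (se_refl M a) Sab) as [_ [_ [_ E1]]].
    destruct (mul_spec1 M a b b HM Ha Hb Hb Sab (se_refl M b)) as [_ [_ [_ E2]]]. auto. }
  { intros g [M [HM [a [b [Ha [Hb [Sab Eg]]]]]]]. subst g. rewrite i_tp, s_tp, t_tp, s_tp, t_tp.
    split; auto. split; auto.
    destruct (mul_spec1 M a b a HM Ha Hb Ha Sab (se_sym L M a b Sab)) as [_ [_ [_ E1]]].
    destruct (mul_spec1 M b a b HM Hb Ha Hb (se_sym L M a b Sab) Sab) as [_ [_ [_ E2]]]. auto. }
Qed.

Lemma mul_cont : continuous_sp (composable T Phi (smap L) (tmap L)) (Gspace T Phi) (fun z => mul (fst z) (snd z)).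
Proof.
  split.
  - intros z [[H1 H2] H3]. simpl in *. unfold mul.
    rewrite rtr_id; [|split; auto].
    simpl. apply (mulnat_C_props (fst z, snd z)). split; auto.
  - intros V HV. cbn. intros x y Hx Hy Vxy.
    assert (Hz : G2 (x, y)) by (split; auto).
    destruct (rtr_C (x, y) Hz) as [Cr _].
    destruct (mulnat_C_props _ Cr) as [Gm _].
    cbn in HV. destruct (HV _ Gm Vxy) as [phi [Hphi HVphi]].
    destruct Cr as [Gr1 [Gr2 _]].
    destruct (mulnat_cont _ _ phi Gr1 Gr2 Hphi) as [N HN].
    destruct (rtr_cont (x, y) Hz N) as [N' HN'].
    exists (fun p => p (bf L E x N')), (fun q => q (bf L E y N')).
    split; [intros p Hp Up; exists (bf L E x N'); split; auto|].
    split; [intros p Hp Up; exists (bf L E y N'); split; auto|].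
    split; [apply (bf_self L Phi T E); auto|]. split; [apply (bf_self L Phi T E); auto|].
    intros x' y' Hx' Hy' Ux' Uy'.
    apply (bf_iff L Phi T E x x' N' Hx Hx') in Ux'. apply (bf_iff L Phi T E y y' N' Hy Hy') in Uy'.
    assert (Hz' : G2 (x', y')) by (split; auto).
    destruct (HN' (x', y') Hz' (conj Ux' Uy')) as [A1 A2].
    destruct (rtr_C (x', y') Hz') as [Cr' _].
    destruct (mulnat_C_props _ Cr') as [Gm' _].
    apply HVphi; auto. unfold mul. apply HN; auto; apply Cr'.
Qed.

Lemma POTG : polish_open_topological_groupoid T Phi.
Proof.
  exists (smap L), (tmap L), (imap L), mul.
  split; [apply maps_spec|]. split; [apply axioms|]. split; [apply mul_cont|].
  split; [apply i_cont|]. split; [apply s_cont|]. split; [apply t_cont|]. split; [apply s_open|].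
  apply (G_polish L Phi HPhi T E HE HG0).
Qed.

End Groupoid.


Unset Implicit Arguments.
Open Scope nat_scope.

Section Cantor.
Variable L : Language.
Variable Phi : seq_formulas L.
Hypothesis HPhi : rich Phi.
Variable T : theory L.
Variable E : nat -> formula L.
Hypothesis HE : forall p, exists n, E n = p.
Hypothesis Hns : no_singleton_model T.
Hypothesis HB0 : exists p0, Bset T Phi p0.

Notation B := (Bset T Phi).

Definition ne (th : formula L) : Prop := exists p, B p /\ p th.

Lemma B_tp p : B p -> exists M a, p = tp2 M a a.
Proof. intros [M [_ [a [_ E0]]]]; exists M, a; auto. Qed.

Lemma B_and p x y : B p -> (p (fAnd x y) <-> p x /\ p y).
Proof. intros Hp; destruct (B_tp p Hp) as [M [a E0]]; subst p; reflexivity. Qed.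
Lemma B_not p x : B p -> (p (fNot x) <-> ~ p x).
Proof. intros Hp; destruct (B_tp p Hp) as [M [a E0]]; subst p; reflexivity. Qed.
Lemma B_true p : B p -> p (fNot (fFalse L)).
Proof. intros Hp; destruct (B_tp p Hp) as [M [a E0]]; subst p; unfold tp2; simpl; auto. Qed.

Lemma perfect th : ne th -> exists chi, ne (fAnd th chi) /\ ne (fAnd th (fNot chi)).
Proof.
  intros [p [Hp Hth]]. destruct Hp as [M [HM [a [Ha Ep]]]]. subst p.
  set (N0 := fb th).
  destruct HPhi as [HisPhi Hr].
  destruct (Hr (S N0) (fEq (tvar L (S N0)) (tvar L (S N0)))) as [n [Hn HPn]].
  { intros m Hm; simpl in Hm; destruct Hm; lia. }
  destruct (TV L Phi HPhi (fNot (fEq (tvar L 0) (tvar L 1))) 0 (fun m => m - 1)) as [n' Hn'].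
  assert (Hdiff : a n' <> a 0).
  { assert (H := Hn' M a Ha (fun _ => a 0)).
    cbn [sat eval] in H. unfold upd in H. simpl in H. apply H.
    - intros m Hm Hm0. simpl in Hm. destruct Hm as [Hm|Hm]; [congruence|]. subst m; reflexivity.
    - destruct (Hns M HM) as [u [v Huv]].
      destruct (classic (u = a 0)) as [h|h]; [exists v; congruence|exists u; auto]. }
  assert (Hbuild : forall d, (exists j, d = a j) -> exists a', realises_D Phi M a' /\ a' 0 = a 0 /\ a' n = d /\
                        forall i, i < n -> a' i = a i).
  { intros d [j Hj].
    set (s := fun i => if Nat.eqb i n then d else a i).
    destruct (Ext2 L Phi HPhi M a s (S n) Ha) as [a' [Hpre [Ha' _]]].
    - intros i _. unfold s. destruct (Nat.eqb i n); [exists j; auto|exists i; auto].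
    - intros k Hk c Hc. destruct (Nat.eq_dec k n) as [Ek|Ek].
      + subst k. rewrite HPn in *. simpl; auto.
      + assert (Eq : forall c', sat M (env_xy M s c') (Phi k) <-> sat M (env_xy M a c') (Phi k)).
        { intros c'; apply sat_coinc; intros m Hm. specialize (HisPhi k m Hm).
          destruct m; simpl; auto. unfold s. destruct (Nat.eqb m n) eqn:Em; auto. apply Nat.eqb_eq in Em; lia. }
        assert (Esk : s k = a k) by (unfold s; destruct (Nat.eqb k n) eqn:Em; auto; apply Nat.eqb_eq in Em; lia).
        rewrite Esk, Eq. rewrite Eq in Hc. apply (Ha k c Hc).
    - exists a'. split; auto. split; [rewrite Hpre by lia; unfold s; destruct (Nat.eqb 0 n) eqn:Em; auto; apply Nat.eqb_eq in Em; lia|].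
      split; [rewrite Hpre by lia; unfold s; rewrite Nat.eqb_refl; auto|].
      intros i Hi; rewrite Hpre by lia; unfold s; destruct (Nat.eqb i n) eqn:Em; auto; apply Nat.eqb_eq in Em; lia. }
  assert (Hth' : forall a', (forall i, i < n -> a' i = a i) -> tp2 M a' a' th).
  { intros a' Hi. revert Hth. unfold tp2. apply sat_coinc. intros m Hm. rewrite !pe_gen.
    apply occurs_free_lt in Hm. assert (Nat.div2 m <= m) by (apply Nat.div2_le_upper_bound; lia).
    destruct (Nat.even m); apply Hi; unfold N0 in *; lia. }
  exists (fEq (tvar L 0) (tvar L (2 * n))). split.
  - destruct (Hbuild (a 0) (ex_intro _ 0 eq_refl)) as [a' [Ha' [H0 [Hn0 Hi]]]].
    exists (tp2 M a' a'). split; [exists M; split; auto; exists a'; auto|].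
    split; [apply Hth'; auto|]. unfold tp2; cbn [sat eval]. rewrite (pe_even L M a' a' n).
    unfold pair_env at 1; simpl. congruence.
  - destruct (Hbuild (a n') (ex_intro _ n' eq_refl)) as [a' [Ha' [H0 [Hn0 Hi]]]].
    exists (tp2 M a' a'). split; [exists M; split; auto; exists a'; auto|].
    split; [apply Hth'; auto|]. unfold tp2; cbn [sat eval]. rewrite (pe_even L M a' a' n).
    unfold pair_env at 1; simpl. congruence.
Qed.

Definition pchi (th : formula L) : formula L :=
  epsilon (inhabits (fFalse L)) (fun chi => ne (fAnd th chi) /\ ne (fAnd th (fNot chi))).

Definition splitter (th : formula L) (n : nat) : formula L :=
  if excluded_middle_informative (ne (fAnd th (E n)) /\ ne (fAnd th (fNot (E n)))) then E n else pchi th.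

Fixpoint theta (s : list bool) : formula L :=
  match s with
  | nil => fNot (fFalse L)
  | b :: s' => if b then fAnd (theta s') (splitter (theta s') (length s'))
               else fAnd (theta s') (fNot (splitter (theta s') (length s')))
  end.

Lemma splitter_ne th n : ne th -> ne (fAnd th (splitter th n)) /\ ne (fAnd th (fNot (splitter th n))).
Proof.
  intros H. unfold splitter. destruct excluded_middle_informative as [h|h]; auto.
  unfold pchi. apply (epsilon_spec (inhabits (fFalse L)) (fun chi => ne (fAnd th chi) /\ ne (fAnd th (fNot chi)))).
  apply perfect; auto.
Qed.

Lemma theta_ne s : ne (theta s).
Proof.
  induction s as [|b s IH]; simpl.
  - destruct HB0 as [p Hp]; exists p; split; auto; apply B_true; auto.
  - destruct (splitter_ne _ (length s) IH) as [H1 H2]. destruct b; auto.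
Qed.

Lemma theta_cons q b s : B q -> (q (theta (b :: s)) <-> q (theta s) /\ (q (splitter (theta s) (length s)) <-> b = true)).
Proof.
  intros Hq. simpl. destruct b.
  - rewrite B_and; auto. intuition.
  - rewrite B_and, B_not; auto. intuition congruence.
Qed.

Lemma theta_dec s m : m < length s ->
  (forall q, B q -> q (theta s) -> q (E m)) \/ (forall q, B q -> q (theta s) -> ~ q (E m)).
Proof.
  induction s as [|b s IH]; simpl; intros Hm; [lia|].
  destruct (Nat.eq_dec m (length s)) as [Em|Em].
  - subst m. unfold splitter.
    destruct excluded_middle_informative as [h|h].
    + destruct b; [left|right]; intros q Hq Hth; [rewrite B_and in Hth; tauto|rewrite B_and, B_not in Hth; tauto].
    + destruct (classic (ne (fAnd (theta s) (E (length s))))) as [h1|h1].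
      * left. intros q Hq Hth. apply NNPP; intros C. apply h; split; auto.
        exists q; split; auto. rewrite B_and, B_not; auto. destruct b; rewrite B_and in Hth; auto; tauto.
      * right. intros q Hq Hth C. apply h1. exists q; split; auto. rewrite B_and; auto.
        destruct b; rewrite B_and in Hth; auto; tauto.
  - destruct (IH ltac:(lia)) as [H|H]; [left|right]; intros q Hq Hth; apply H; auto;
      destruct b; rewrite B_and in Hth; tauto.
Qed.

Fixpoint pf (q : ptype L) (n : nat) : list bool :=
  match n with
  | O => nil
  | S n' => (if excluded_middle_informative (q (splitter (theta (pf q n')) n')) then true else false) :: pf q n'
  end.

Lemma pf_length q n : length (pf q n) = n.
Proof. induction n; simpl; auto. Qed.

Fixpoint pre (x : nat -> bool) (n : nat) : list bool :=
  match n with O => nil | S n' => x n' :: pre x n' end.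

Lemma pre_length x n : length (pre x n) = n.
Proof. induction n; simpl; auto. Qed.

Definition fmap (q : ptype L) (n : nat) : bool := hd false (pf q (S n)).

Lemma pre_fmap q n : pre (fmap q) n = pf q n.
Proof. induction n; simpl; auto. rewrite IHn. unfold fmap. simpl. reflexivity. Qed.

Lemma pf_theta q n : B q -> q (theta (pf q n)).
Proof.
  intros Hq. induction n; simpl.
  - apply B_true; auto.
  - rewrite pf_length. destruct excluded_middle_informative as [h|h].
    + apply B_and; auto.
    + apply B_and; auto. split; auto. apply B_not; auto.
Qed.

Lemma pf_unique q s : B q -> q (theta s) -> pf q (length s) = s.
Proof.
  intros Hq. induction s as [|b s IH]; intros H; [reflexivity|].
  apply theta_cons in H; auto. destruct H as [H1 H2]. change (length (b :: s)) with (S (length s)).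
  cbn [pf]. rewrite (IH H1).
  destruct excluded_middle_informative as [h|h]; f_equal.
  - symmetry; apply H2; auto.
  - destruct b; auto. exfalso; apply h; apply H2; auto.
Qed.

Lemma pre_agree x y n : (forall i, i < n -> x i = y i) -> pre x n = pre y n.
Proof. induction n; simpl; intros H; auto. rewrite H, IHn; auto. Qed.

Lemma pre_agree' x y n : pre x n = pre y n -> forall i, i < n -> x i = y i.
Proof.
  induction n; simpl; intros H i Hi; [lia|]. injection H; intros H1 H2.
  destruct (Nat.eq_dec i n); [subst; auto|apply IHn; auto; lia].
Qed.

Lemma pre_mono q x j k : B q -> j <= k -> q (theta (pre x k)) -> q (theta (pre x j)).
Proof.
  intros Hq Hjk. induction k; intros H.
  - replace j with 0 by lia; auto.
  - destruct (Nat.eq_dec j (S k)); [subst; auto|]. apply IHk; [lia|].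
    simpl in H. destruct (x k); apply B_and in H; tauto.
Qed.

Definition qx (x : nat -> bool) (n : nat) : ptype L :=
  epsilon (inhabits (fun _ => True)) (fun q => B q /\ q (theta (pre x n))).

Lemma qx_spec x n : B (qx x n) /\ qx x n (theta (pre x n)).
Proof. unfold qx; apply (epsilon_spec (inhabits (fun _ => True)) (fun q => B q /\ q (theta (pre x n)))). apply theta_ne. Qed.

Definition gmap (x : nat -> bool) : ptype L := fun phi => ev (fun n => qx x n phi).

Lemma B_choose (u : nat -> ptype L) : (forall k, B (u k)) ->
  exists (Ms : nat -> Structure L) (a : forall k, nat -> dom (Ms k)),
    forall k, is_model T (Ms k) /\ realises_D Phi (Ms k) (a k) /\ u k = tp2 (Ms k) (a k) (a k).
Proof.
  intros H.
  set (pick := fun k => constructive_indefinite_description _ (H k)).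
  set (Ms := fun k => proj1_sig (pick k)).
  set (pa := fun k => constructive_indefinite_description _ (proj2 (proj2_sig (pick k)))).
  exists Ms, (fun k => proj1_sig (pa k)). intros k. split; [apply (proj1 (proj2_sig (pick k)))|].
  apply (proj2_sig (pa k)).
Qed.

Lemma gmap_B x : B (gmap x) /\ forall n, gmap x (theta (pre x n)).
Proof.
  destruct (B_choose (qx x) (fun k => proj1 (qx_spec x k))) as [Ms [a Hab]].
  set (e := fun k => pair_env (Ms k) (a k) (a k)).
  assert (Hue : forall k phi, qx x k phi <-> sat (Ms k) (e k) phi).
  { intros k phi. destruct (Hab k) as [_ [_ Ek]]. rewrite Ek; reflexivity. }
  destruct (LL L Phi HPhi T Ms a e) as [LMd [HLM [e0 He0]]].
  - intros k; apply Hab.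
  - intros k; apply Hab.
  - intros m. exists (Nat.div2 m). apply ev_true; intros k. unfold e, pair_env. destruct (Nat.even m); reflexivity.
  - intros k i; unfold e; apply pe_even.
  - intros phi. destruct (HE phi) as [m Hm]; subst phi.
    destruct (theta_dec (pre x (S m)) m ltac:(rewrite pre_length; lia)) as [H|H]; [left|right];
      exists (S m); intros k Hk; rewrite <- Hue; apply H; try apply qx_spec;
      apply (pre_mono _ x (S m) k); auto; apply qx_spec.
  - assert (Hg : forall phi, gmap x phi <-> sat LMd e0 phi).
    { intros phi. rewrite He0. unfold gmap. split; apply ev_mono; intros k; rewrite Hue; auto. }
    assert (He2 : forall j, e0 (2 * j + 1) = e0 (2 * j)).
    { intros j. pose proof (proj2 (He0 (fEq (tvar L (2 * j + 1)) (tvar L (2 * j))))) as H.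
      apply H. apply ev_true; intros k. unfold e; cbn [sat eval]. rewrite pe_odd, pe_even; auto. }
    assert (Eg : gmap x = tp2 LMd (fun i => e0 (2 * i)) (fun i => e0 (2 * i))).
    { apply functional_extensionality; intros phi; apply propositional_extensionality.
      rewrite Hg. unfold tp2. apply sat_ext. intros m. rewrite pe_gen.
      destruct (parity m) as [[E1 E2]|[E1 E2]]; rewrite E1.
      - rewrite <- E2; auto.
      - rewrite <- He2. rewrite <- E2. auto. }
    split.
    + rewrite Eg. exists LMd; split; auto. exists (fun i => e0 (2 * i)); split; auto.
      apply (Dx_tp L Phi LMd _ (fun i => e0 (2 * i))). rewrite <- Eg.
      intros k0. apply ev_true; intros k. destruct (Hab k) as [_ [Hk Ek]].
      rewrite Ek. apply Dx_tp; auto.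
    + intros n. exists n; intros k Hk. apply (pre_mono _ x n k); auto; apply qx_spec.
Qed.

Lemma gf q : B q -> gmap (fmap q) = q.
Proof.
  intros Hq. destruct (gmap_B (fmap q)) as [Hg1 Hg2].
  apply functional_extensionality; intros phi; apply propositional_extensionality.
  destruct (HE phi) as [m Hm]; subst phi.
  specialize (Hg2 (S m)). rewrite pre_fmap in Hg2.
  destruct (theta_dec (pf q (S m)) m ltac:(rewrite pf_length; lia)) as [H|H].
  - split; intros _; apply H; auto; apply pf_theta; auto.
  - split; intros C; exfalso; [apply (H (gmap (fmap q))); auto| apply (H q); auto; apply pf_theta; auto].
Qed.

Lemma fg x : fmap (gmap x) = x.
Proof.
  apply functional_extensionality; intros n.
  destruct (gmap_B x) as [Hg1 Hg2].
  pose proof (pf_unique (gmap x) (pre x (S n)) Hg1 (Hg2 (S n))) as H.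
  rewrite pre_length in H. unfold fmap. rewrite H. reflexivity.
Qed.

Lemma cantor_homeo : homeomorphic (Bspace T Phi) cantor.
Proof.
  exists fmap, gmap. split; [|split; [|split]].
  - split; [intros x _; exact I|].
    intros V HV q Hq Vq. simpl in HV. destruct (HV _ Vq) as [n Hn].
    exists (theta (pf q n)). split; [apply pf_theta; auto|].
    intros q' Hq' Hth. apply Hn. intros i Hi.
    apply (pre_agree' (fmap q') (fmap q) n); auto.
    rewrite !pre_fmap. rewrite <- (pf_length q n) at 1. apply pf_unique; auto.
  - split; [intros x _; apply gmap_B|].
    intros V HV x Vx. simpl in HV. destruct (gmap_B x) as [Hg1 Hg2].
    destruct (HV _ Hg1 Vx) as [phi [H1 H2]]. destruct (HE phi) as [m Hm]; subst phi.
    exists (S m). intros y Hy. destruct (gmap_B y) as [Hy1 Hy2].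
    apply H2; auto.
    assert (Ep : pre y (S m) = pre x (S m)) by (apply pre_agree; auto).
    specialize (Hy2 (S m)). rewrite Ep in Hy2.
    destruct (theta_dec (pre x (S m)) m ltac:(rewrite pre_length; lia)) as [H|H].
    + apply H; auto.
    + exfalso; apply (H (gmap x)); auto.
  - intros q Hq; apply gf; auto.
  - intros x _; apply fg.
Qed.

End Cantor.


Unset Implicit Arguments.

Theorem lemma2p7 (L : Language) (T : theory L) (Phi : seq_formulas L) :
  countable_language L ->
  (forall phi, T phi -> sentence phi) ->
  complete_theory T ->
  no_singleton_model T ->
  rich Phi ->
  polish_open_topological_groupoid T Phi /\
  homeomorphic (Bspace T Phi) cantor.
Proof.
  intros Hc Hs [[M HM] _] Hns HPhi.
  destruct (formula_enum L Hc) as [E HE].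
  destruct (Ext1 L Phi HPhi M) as [a Ha].
  assert (HB0 : exists p, Bset T Phi p) by (exists (tp2 M a a); exists M; split; auto; exists a; auto).
  assert (HG0 : exists p, Gset T Phi p) by (destruct HB0 as [p Hp]; exists p; apply (B_G L Phi T); auto).
  split; [apply (POTG L Phi HPhi T E HE HG0) | apply (cantor_homeo L Phi HPhi T E HE Hns HB0)].
Qed.
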